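(* Let $N\geq 2$ and let $\sigma_1,\dots,\sigma_N:\mathbb{R}\to\mathbb{R}$ be functions admitting a Taylor decomposition on $\mathbb{R}$, i.e. $\sigma_i(x)=\sum_{t\ge0}\frac{\sigma_i^{(t)}(0)}{t!}x^t$ for all $x\in\mathbb{R}$. For $i=1,\dots,N$ define $f_i(x)=\sum_{t\geq 0}\frac{|\sigma_i^{(t)}(0)|}{t!}x^t$. Then the function on $\mathcal{I}\times\mathcal{I}$ $$K_N(\mathbf{X},\mathbf{X}'):=f_N\circ\cdots\circ f_2\Big(\sum_{i=1}^{n} f_1\big(\langle \mathbf{X}_i,\mathbf{X}'_i\rangle_{\mathbb{R}^{d}}\big)\Big)$$ is a positive (semi-)definite kernel on $\mathcal{I}$, and its RKHS $H_N$ contains $\mathcal{F}_{(\sigma_i)_{i=1}^N}$, the set of all functions computed by convolutional networks with activations $\sigma_1,\dots,\sigma_N$ (for every choice of numbers of filters and weights). Moreover, if $\sigma_i^{(t)}(0)\neq 0$ for all $i\in\{1,\dots,N\}$ and all $t\geq 0$, then $K_N$ is $c$-universal on $\mathcal{I}$, i.e. $K_N$ is continuous and $H_N$ is dense in $\mathcal{C}(\mathcal{I})$ for the uniform norm.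
   Context: Let $d\geq 2$, $n\geq 1$, $S^{d-1}\subset\mathbb{R}^d$ the unit sphere and $\mathcal{I}=(S^{d-1})^n$; write $\mathbf{X}=(\mathbf{X}_1,\dots,\mathbf{X}_n)\in\mathcal{I}$ with $\mathbf{X}_i\in S^{d-1}$ (normalized image patches). Convolutional network: fix $N\ge 2$, activations $\sigma_1,\dots,\sigma_N$, and integers $d_1=d$, $p_1=1$, $n_1=n$; for $k=2,\dots,N$ integers $p_k,d_k,n_k\geq1$; an integer $p_{N+1}\ge1$; and $d_{N+1}=n_N$, $n_{N+1}=1$, with $n_k+d_k-1\le n_{k-1}$ for $k=2,\dots,N+1$. Fix real pooling factors $(\gamma^k_{i,j})_{i,j=1}^{n_k}$ for $k=1,\dots,N$. Weights: $W^k\in\mathbb{R}^{p_{k+1}\times d_kp_k}$ with rows $w^k_1,\dots,w^k_{p_{k+1}}\in\mathbb{R}^{d_kp_k}$ for $k=1,\dots,N$, and $W^{N+1}\in\mathbb{R}^{d_{N+1}p_{N+1}}$. Given $\mathbf{X}^1\in\mathcal{I}$ (viewed as $n_1$ vectors $\mathbf{X}^1_q\in\mathbb{R}^{d_1p_1}$), define recursively for $k=1,\dots,N$: $Z^{k+1}(i,j)=\sum_{q=1}^{n_k}\gamma^k_{i,q}\,\sigma_k(\langle \mathbf{X}^k_q,w^k_j\rangle)$ for $i\le n_k$, $j\le p_{k+1}$; $U_i=(Z^{k+1}(i,1),\dots,Z^{k+1}(i,p_{k+1}))\in\mathbb{R}^{p_{k+1}}$; and $\mathbf{X}^{k+1}_q=(U_q,U_{q+1},\dots,U_{q+d_{k+1}-1})\in\mathbb{R}^{d_{k+1}p_{k+1}}$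 for $q=1,\dots,n_{k+1}$ (patch extraction). The network function is $\mathcal{N}_W(\mathbf{X}^1)=\langle \mathbf{X}^{N+1}_1,W^{N+1}\rangle$. $\mathcal{F}_{(\sigma_i)_{i=1}^N,(p_i)}$ is the set of all $\mathcal{N}_W$ over all weights, and $\mathcal{F}_{(\sigma_i)_{i=1}^N}$ is the union of these sets over all choices of the numbers of filters $p_2,\dots,p_{N+1}\ge1$ (the sizes $d_k,n_k$ and pooling factors being fixed arbitrarily). *)

(* Defs.v *)
From Stdlib Require Import Reals Lra Lia Factorial.
Open Scope R_scope.

Fixpoint rsum (n : nat) (f : nat -> R) : R :=
  match n with O => 0 | S n' => rsum n' f + f n' end.

(* Points of R^{d x n}: X i k = k-th coordinate of patch X_i (0-indexed). *)
Definition Pt := nat -> nat -> R.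

Definition inI (d n : nat) (X : Pt) : Prop :=
  forall i, (i < n)%nat -> rsum d (fun k => X i k ^ 2) = 1.

Definition dist (d n : nat) (X Y : Pt) : R :=
  sqrt (rsum n (fun i => rsum d (fun k => (X i k - Y i k) ^ 2))).

Definition deriv_tower (s : R -> R) (D : nat -> R -> R) : Prop :=
  D O = s /\ forall t x, derivable_pt_lim (D t) x (D (S t) x).

Definition taylor_decomp (s : R -> R) (D : nat -> R -> R) : Prop :=
  forall x, infinite_sum (fun t => D t 0 / INR (fact t) * x ^ t) (s x).

Definition kernel := Pt -> Pt -> R.

Definition psd_kernel (inS : Pt -> Prop) (K : kernel) : Prop :=
  (forall x y, inS x -> inS y -> K x y = K y x) /\
  (forall (m : nat) (c : nat -> R) (x : nat -> Pt),
     (forall i, (i < m)%nat -> inS (x i)) ->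
     0 <= rsum m (fun i => rsum m (fun j => c i * c j * K (x i) (x j)))).

(* finite kernel combinations h = sum_{i<m} a_i K(., y_i) *)
Record combo := Combo { cm : nat; ca : nat -> R; cy : nat -> Pt }.

Definition combo_eval (K : kernel) (h : combo) (x : Pt) : R :=
  rsum (cm h) (fun i => ca h i * K x (cy h i)).

Definition combo_in (inS : Pt -> Prop) (h : combo) : Prop :=
  forall i, (i < cm h)%nat -> inS (cy h i).

Definition bil (K : kernel) (h g : combo) : R :=
  rsum (cm h) (fun i => rsum (cm g) (fun j => ca h i * ca g j * K (cy h i) (cy g j))).

Definition norm2_diff (K : kernel) (h g : combo) : R :=
  bil K h h - 2 * bil K h g + bil K g g.

(* RKHS of K on S (Moore-Aronszajn completion): f is the pointwise limit on S
   of a sequence of kernel combinations, Cauchy in the pre-RKHS norm. *)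
Definition in_RKHS (inS : Pt -> Prop) (K : kernel) (f : Pt -> R) : Prop :=
  exists h : nat -> combo,
    (forall p, combo_in inS (h p)) /\
    (forall eps, eps > 0 -> exists M, forall p q, (p >= M)%nat -> (q >= M)%nat ->
        norm2_diff K (h p) (h q) < eps) /\
    (forall x, inS x -> Un_cv (fun p => combo_eval K (h p) x) (f x)).

Definition continuous_on_I (d n : nat) (g : Pt -> R) : Prop :=
  forall x, inI d n x -> forall eps, eps > 0 -> exists del, del > 0 /\
    forall y, inI d n y -> dist d n x y < del -> Rabs (g y - g x) < eps.

Definition kernel_continuous_on_I (d n : nat) (K : kernel) : Prop :=
  forall x y, inI d n x -> inI d n y -> forall eps, eps > 0 -> exists del, del > 0 /\
    forall x' y', inI d n x' -> inI d n y' -> dist d n x x' < del -> dist d n y y' < del ->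
      Rabs (K x' y' - K x y) < eps.

Definition c_universal (d n : nat) (K : kernel) : Prop :=
  kernel_continuous_on_I d n K /\
  forall g, continuous_on_I d n g -> forall eps, eps > 0 ->
    exists h, in_RKHS (inI d n) K h /\ forall x, inI d n x -> Rabs (h x - g x) < eps.

(* fcomp f j = f_{j+1} o ... o f_2  (fcomp f 0 = id) *)
Fixpoint fcomp (f : nat -> R -> R) (j : nat) (x : R) : R :=
  match j with O => x | S j' => f (S (S j')) (fcomp f j' x) end.

Definition KN (d n N : nat) (f : nat -> R -> R) : kernel :=
  fun X X' => fcomp f (N - 1) (rsum n (fun i => f 1%nat (rsum d (fun k => X i k * X' i k)))).

(* sigma k : activation of layer k (k = 1..N); dd k, nn k, pp k : d_k, n_k, p_k;
   gam k i q : pooling factor gamma^k_{i,q} (0-indexed);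
   W k j m : m-th entry of row w^k_j of W^k (0-indexed); WN : W^{N+1}.
   Layer vectors: Xk q m = m-th coordinate of X^k_q (0-indexed). *)
Section CNN.
Variables (sigma : nat -> R -> R) (dd nn pp : nat -> nat)
          (gam : nat -> nat -> nat -> R) (W : nat -> nat -> nat -> R).

Definition Zl (k : nat) (Xk : Pt) (i j : nat) : R :=
  rsum (nn k) (fun q => gam k i q * sigma k (rsum (dd k * pp k) (fun m => Xk q m * W k j m))).

(* X^{k+1}_q = (U_q, ..., U_{q+d_{k+1}-1}), U_i = (Z^{k+1}(i,j))_j *)
Definition nextl (k : nat) (Xk : Pt) : Pt :=
  fun q m => Zl k Xk (q + m / pp (S k))%nat (m mod pp (S k))%nat.

(* Xs X k = X^{k+1} *)
Fixpoint Xs (X : Pt) (k : nat) : Pt :=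
  match k with O => X | S k' => nextl k (Xs X k') end.

Definition cnn (N : nat) (WN : nat -> R) (X : Pt) : R :=
  rsum (dd (S N) * pp (S N)) (fun m => Xs X N O m * WN m).
End CNN.

Definition arch_ok (d n N : nat) (dd nn pp : nat -> nat) : Prop :=
  dd 1%nat = d /\ pp 1%nat = 1%nat /\ nn 1%nat = n /\
  (forall k, (2 <= k <= N)%nat -> (1 <= pp k)%nat /\ (1 <= dd k)%nat /\ (1 <= nn k)%nat) /\
  (1 <= pp (S N))%nat /\ dd (S N) = nn N /\ nn (S N) = 1%nat /\
  (forall k, (2 <= k <= S N)%nat -> (nn k + dd k - 1 <= nn (k - 1))%nat).

(* Main.v *)
Require Import Defs.
From Stdlib Require Import Reals Factorial.
From Stdlib Require Import Lra Lia Psatz Classical ClassicalEpsilon List.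
Open Scope R_scope.

Lemma rsum_ext m F G : (forall i, (i < m)%nat -> F i = G i) -> rsum m F = rsum m G.
Proof. induction m; simpl; intros H; auto. rewrite IHm by (intros; apply H; lia). rewrite H by lia. auto. Qed.

Lemma rsum_plus m F G : rsum m (fun i => F i + G i) = rsum m F + rsum m G.
Proof. induction m; simpl; [lra|]. rewrite IHm; lra. Qed.

Lemma rsum_minus m F G : rsum m (fun i => F i - G i) = rsum m F - rsum m G.
Proof. induction m; simpl; [lra|]. rewrite IHm; lra. Qed.

Lemma rsum_scal m r F : rsum m (fun i => r * F i) = r * rsum m F.
Proof. induction m; simpl; [lra|]. rewrite IHm; lra. Qed.

Lemma rsum_scalr m r F : rsum m (fun i => F i * r) = rsum m F * r.
Proof. induction m; simpl; [lra|]. rewrite IHm; lra. Qed.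

Lemma rsum_zero m : rsum m (fun _ => 0) = 0.
Proof. induction m; simpl; [lra|]. rewrite IHm; lra. Qed.

Lemma rsum_nonneg m F : (forall i, (i < m)%nat -> 0 <= F i) -> 0 <= rsum m F.
Proof. induction m; simpl; intros H; [lra|]. pose proof (H m ltac:(lia)). pose proof (IHm ltac:(intros; apply H; lia)). lra. Qed.

Lemma rsum_le m F G : (forall i, (i < m)%nat -> F i <= G i) -> rsum m F <= rsum m G.
Proof. induction m; simpl; intros H; [lra|]. pose proof (H m ltac:(lia)). pose proof (IHm ltac:(intros; apply H; lia)). lra. Qed.

Lemma rsum_app m1 m2 F : rsum (m1 + m2) F = rsum m1 F + rsum m2 (fun i => F (m1 + i)%nat).
Proof. induction m2; simpl. rewrite Nat.add_0_r; lra. rewrite Nat.add_succ_r; simpl. rewrite IHm2; lra. Qed.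

Lemma rsum_swap m p F : rsum m (fun i => rsum p (fun j => F i j)) = rsum p (fun j => rsum m (fun i => F i j)).
Proof. induction m; simpl. rewrite rsum_zero; auto. rewrite IHm. rewrite <- rsum_plus. auto. Qed.

Lemma rsum_abs m F : Rabs (rsum m F) <= rsum m (fun i => Rabs (F i)).
Proof. induction m; simpl. rewrite Rabs_R0; lra. eapply Rle_trans. apply Rabs_triang. lra. Qed.

Lemma rsum_delta m k u F : (k < m)%nat -> rsum m (fun j => (if Nat.eqb j k then u else 0) * F j) = u * F k.
Proof. induction m; intros H; simpl. lia. destruct (Nat.eqb m k) eqn:E.
 - apply Nat.eqb_eq in E; subst. rewrite (rsum_ext _ _ (fun _ => 0)). rewrite rsum_zero; lra.
   intros i Hi. destruct (Nat.eqb i k) eqn:E2. apply Nat.eqb_eq in E2; lia. lra.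
 - apply Nat.eqb_neq in E. rewrite IHm by lia. lra. Qed.

Lemma rsum_remove m k F : (k < m)%nat -> rsum m F = F k + rsum m (fun j => if Nat.eqb j k then 0 else F j).
Proof. intros H. assert (E: forall j, F j = (if Nat.eqb j k then 1 else 0) * F j + (if Nat.eqb j k then 0 else F j)).
 intros j; destruct (Nat.eqb j k); lra.
 rewrite (rsum_ext m F (fun j => (if Nat.eqb j k then 1 else 0) * F j + (if Nat.eqb j k then 0 else F j))) by (intros; apply E).
 rewrite rsum_plus, rsum_delta by auto. lra. Qed.

Lemma rsum_term_le m k F : (forall i, (i < m)%nat -> 0 <= F i) -> (k < m)%nat -> F k <= rsum m F.
Proof. intros H Hk. rewrite (rsum_remove m k) by auto. assert (0 <= rsum m (fun j => if Nat.eqb j k then 0 else F j)).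
 apply rsum_nonneg. intros i Hi; destruct (Nat.eqb i k); auto; lra. lra. Qed.

Lemma rsum_mono_len m m' F : (forall i, 0 <= F i) -> (m <= m')%nat -> rsum m F <= rsum m' F.
Proof. intros H Hm. replace m' with (m + (m' - m))%nat by lia. rewrite rsum_app.
 assert (0 <= rsum (m' - m) (fun i => F (m + i)%nat)) by (apply rsum_nonneg; auto). lra. Qed.

Lemma rsum_sum_f s n : sum_f_R0 s n = rsum (S n) s.
Proof. induction n; simpl; [lra|]. simpl in IHn. rewrite IHn; simpl; lra. Qed.

Lemma rsum_cv m (F : nat -> nat -> R) (l : nat -> R) :
  (forall i, (i < m)%nat -> Un_cv (fun p => F p i) (l i)) -> Un_cv (fun p => rsum m (F p)) (rsum m l).
Proof. induction m; intros H; simpl.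
 - intros e He. exists O. intros. unfold R_dist. rewrite Rminus_diag, Rabs_R0. auto.
 - apply CV_plus. apply IHm. intros; apply H; lia. apply H; lia. Qed.

Definition QF (m : nat) (c : nat -> R) (A : nat -> nat -> R) : R :=
  rsum m (fun i => rsum m (fun j => c i * c j * A i j)).

Definition mpsd m A := forall c, 0 <= QF m c A.
Definition msym m (A : nat -> nat -> R) := forall i j, (i < m)%nat -> (j < m)%nat -> A i j = A j i.

Lemma QF_S m c A : QF (S m) c A = QF m c A + rsum m (fun i => c i * c m * A i m)
   + rsum m (fun j => c m * c j * A m j) + c m * c m * A m m.
Proof. unfold QF. simpl. rewrite rsum_plus. lra. Qed.

Lemma QF_ext m c c' A A' : (forall i, (i < m)%nat -> c i = c' i) ->
  (forall i j, (i < m)%nat -> (j < m)%nat -> A i j = A' i j) -> QF m c A = QF m c' A'.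
Proof. intros H1 H2. unfold QF. apply rsum_ext; intros i Hi. apply rsum_ext; intros j Hj.
 rewrite H1, H1, H2 by auto. auto. Qed.

Lemma QF_plus m c A B : QF m c (fun i j => A i j + B i j) = QF m c A + QF m c B.
Proof. unfold QF. rewrite <- rsum_plus. apply rsum_ext; intros. rewrite <- rsum_plus. apply rsum_ext; intros. lra. Qed.

Lemma QF_minus m c A B : QF m c (fun i j => A i j - B i j) = QF m c A - QF m c B.
Proof. unfold QF. rewrite <- rsum_minus. apply rsum_ext; intros. rewrite <- rsum_minus. apply rsum_ext; intros. lra. Qed.

Lemma QF_scal m c r A : QF m c (fun i j => r * A i j) = r * QF m c A.
Proof. unfold QF. rewrite <- rsum_scal. apply rsum_ext; intros. rewrite <- rsum_scal. apply rsum_ext; intros. lra. Qed.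

Lemma QF_rank1 m c (v : nat -> R) : QF m c (fun i j => v i * v j) = (rsum m (fun i => c i * v i))^2.
Proof. unfold QF. simpl. rewrite Rmult_1_r. rewrite <- rsum_scalr. apply rsum_ext; intros.
 rewrite <- rsum_scal. apply rsum_ext; intros. lra. Qed.

Lemma QF_rsum m c p (F : nat -> nat -> nat -> R) :
  QF m c (fun i j => rsum p (fun t => F t i j)) = rsum p (fun t => QF m c (F t)).
Proof. unfold QF.
 transitivity (rsum m (fun i => rsum p (fun t => rsum m (fun j => c i * c j * F t i j)))).
 - apply rsum_ext; intros i _.
   rewrite <- (rsum_swap m p (fun j t => c i * c j * F t i j)). apply rsum_ext; intros j _.
   rewrite <- rsum_scal. auto.
 - apply rsum_swap. Qed.

Lemma QF_scalc m c r A : QF m (fun i => r * c i) A = r^2 * QF m c A.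
Proof. unfold QF. rewrite <- rsum_scal. apply rsum_ext; intros. rewrite <- rsum_scal. apply rsum_ext; intros. lra. Qed.

Lemma QF_cv m c (A : nat -> nat -> nat -> R) Ainf :
  (forall i j, (i < m)%nat -> (j < m)%nat -> Un_cv (fun p => A p i j) (Ainf i j)) ->
  Un_cv (fun p => QF m c (A p)) (QF m c Ainf).
Proof. intros H. unfold QF. apply (rsum_cv m (fun p i => rsum m (fun j => c i * c j * A p i j))).
 intros i Hi. apply (rsum_cv m (fun p j => c i * c j * A p i j)). intros j Hj.
 apply CV_mult. intros e He; exists O; intros; unfold R_dist; rewrite Rminus_diag, Rabs_R0; auto. auto. Qed.

Lemma QF_add_c m c d A : QF m (fun i => c i + d i) A = QF m c A +
   rsum m (fun i => rsum m (fun j => c i * d j * A i j)) + rsum m (fun i => rsum m (fun j => d i * c j * A i j)) + QF m d A.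
Proof. unfold QF. rewrite <- !rsum_plus. apply rsum_ext; intros. rewrite <- !rsum_plus. apply rsum_ext; intros. lra. Qed.

Lemma QF_delta m c A k u : (k < m)%nat -> msym m A ->
  QF m (fun i => c i + (if Nat.eqb i k then u else 0)) A =
  QF m c A + 2 * u * rsum m (fun i => c i * A i k) + u * u * A k k.
Proof. intros Hk Hs. rewrite QF_add_c.
 assert (E1 : rsum m (fun i => rsum m (fun j => c i * (if Nat.eqb j k then u else 0) * A i j)) = u * rsum m (fun i => c i * A i k)).
 { rewrite <- rsum_scal. apply rsum_ext; intros i Hi.
   rewrite (rsum_ext m _ (fun j => (if Nat.eqb j k then u else 0) * (c i * A i j))) by (intros; lra).
   rewrite rsum_delta by auto. lra. }
 assert (E2 : rsum m (fun i => rsum m (fun j => (if Nat.eqb i k then u else 0) * c j * A i j)) = u * rsum m (fun i => c i * A i k)).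
 { rewrite (rsum_ext m _ (fun i => (if Nat.eqb i k then u else 0) * rsum m (fun j => c j * A i j))).
   rewrite rsum_delta by auto. f_equal. apply rsum_ext; intros. rewrite Hs; auto.
   intros i Hi. rewrite <- rsum_scal. apply rsum_ext; intros; lra. }
 assert (E3 : QF m (fun i => if Nat.eqb i k then u else 0) A = u * u * A k k).
 { unfold QF. rewrite (rsum_ext m _ (fun i => (if Nat.eqb i k then u else 0) * rsum m (fun j => (if Nat.eqb j k then u else 0) * A i j))).
   rewrite rsum_delta by auto. rewrite rsum_delta by auto. lra.
   intros i Hi. rewrite <- rsum_scal. apply rsum_ext; intros; lra. }
 rewrite E1, E2, E3. lra. Qed.

Lemma mpsd_diag m A k : mpsd m A -> (k < m)%nat -> 0 <= A k k.
Proof. intros H Hk. pose proof (H (fun i => if Nat.eqb i k then 1 else 0)) as H1. unfold QF in H1.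
 rewrite (rsum_ext m _ (fun i => (if Nat.eqb i k then 1 else 0) * rsum m (fun j => (if Nat.eqb j k then 1 else 0) * A i j))) in H1.
 rewrite rsum_delta in H1 by auto. rewrite rsum_delta in H1 by auto. lra.
 intros i Hi. rewrite <- rsum_scal. apply rsum_ext; intros; lra. Qed.

Lemma mpsd_restrict m A : mpsd (S m) A -> mpsd m A.
Proof. intros H c0. pose proof (H (fun i => if Nat.eqb i m then 0 else c0 i)) as H0. rewrite QF_S in H0.
 rewrite Nat.eqb_refl in H0.
 rewrite (rsum_ext m (fun i => _ * 0 * A i m) (fun _ => 0)) in H0 by (intros; lra).
 rewrite (rsum_ext m (fun j => 0 * _ * A m j) (fun _ => 0)) in H0 by (intros; lra).
 rewrite rsum_zero in H0.
 rewrite (QF_ext m _ c0 A A) in H0. lra.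
 intros i Hi. destruct (Nat.eqb_spec i m). lia. auto. auto. Qed.

Lemma schur m : forall A B, msym m A -> mpsd m A -> mpsd m B -> mpsd m (fun i j => A i j * B i j).
Proof.
 induction m as [|m IH]; intros A B Hs HA HB c.
 - unfold QF; simpl; lra.
 - set (al := A m m).
   assert (Hal : 0 <= al) by (apply (mpsd_diag (S m)); auto).
   set (r := if Req_dec_T al 0 then 0 else / al).
   set (A' := fun i j => A i j - r * (A i m * A j m)).
   assert (Hr : 0 <= r). { unfold r; destruct (Req_dec_T al 0). lra. apply Rlt_le, Rinv_0_lt_compat; lra. }
   assert (Hlast : forall i, (i < S m)%nat -> A' i m = 0).
   { intros i Hi. unfold A', r. destruct (Req_dec_T al 0) as [E|E].
     - (* al = 0 forces A i m = 0 *)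
       assert (forall c0, rsum (S m) (fun j => c0 j * A j m) = 0).
       { intros c0. set (s := rsum (S m) (fun j => c0 j * A j m)).
         destruct (Req_dec_T s 0) as [Es|Es]; auto. exfalso.
         set (u := - (QF (S m) c0 A + 1) / (2 * s)).
         pose proof (HA (fun i => c0 i + (if Nat.eqb i m then u else 0))) as H0.
         rewrite QF_delta in H0 by (auto; lia). fold s in H0. fold al in H0. rewrite E in H0.
         replace (2 * u * s) with (- (QF (S m) c0 A + 1)) in H0 by (unfold u; field; auto). lra. }
       pose proof (H (fun j => if Nat.eqb j i then 1 else 0)) as H1.
       cbv beta in H1. rewrite rsum_delta in H1 by auto. lra.
     - fold al. unfold al. field. auto. }
   assert (HsA' : msym (S m) A') by (intros i j Hi Hj; unfold A'; rewrite Hs by auto; lra).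
   assert (HA' : mpsd (S m) A').
   { intros c0. unfold A'. rewrite QF_minus, QF_scal, QF_rank1.
     set (s := rsum (S m) (fun i => c0 i * A i m)). unfold r. destruct (Req_dec_T al 0). pose proof (HA c0); lra.
     pose proof (HA (fun i => c0 i + (if Nat.eqb i m then - s / al else 0))) as H0.
     rewrite QF_delta in H0 by (auto; lia). fold s al in H0. fold al.
     replace (QF (S m) c0 A - / al * s ^ 2) with (QF (S m) c0 A + 2 * (- s / al) * s + - s / al * (- s / al) * al). lra.
     field. auto. }
   assert (Hdec : QF (S m) c (fun i j => A i j * B i j) =
      QF (S m) c (fun i j => A' i j * B i j) + r * QF (S m) (fun i => c i * A i m) B).
   { unfold QF. rewrite <- rsum_scal, <- rsum_plus. apply rsum_ext; intros.
     rewrite <- rsum_scal, <- rsum_plus. apply rsum_ext; intros. unfold A'. ring. }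
   rewrite Hdec.
   assert (0 <= r * QF (S m) (fun i => c i * A i m) B) by (apply Rmult_le_pos; auto).
   assert (0 <= QF (S m) c (fun i j => A' i j * B i j)).
   { rewrite QF_S.
     rewrite (rsum_ext m (fun i => c i * c m * (A' i m * B i m)) (fun _ => 0)) by (intros; rewrite Hlast by lia; lra).
     rewrite (rsum_ext m (fun j => c m * c j * (A' m j * B m j)) (fun _ => 0)) by (intros; rewrite HsA', Hlast by lia; lra).
     rewrite Hlast by lia. rewrite !rsum_zero.
     assert (0 <= QF m c (fun i j => A' i j * B i j)).
     { apply IH. intros i j Hi Hj; apply HsA'; lia. apply mpsd_restrict; auto. apply mpsd_restrict; auto. }
     lra. }
   lra.
Qed.

Lemma Rabs_def2b x a : Rabs x <= a -> - a <= x <= a.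
Proof. unfold Rabs; destruct (Rcase_abs x); intros; lra. Qed.

Lemma cv_le u l b : Un_cv u l -> (forall p, u p <= b) -> l <= b.
Proof. intros H Hb. destruct (Rle_dec l b) as [|N]; auto. exfalso.
 destruct (H (l - b)) as [P HP]. lra. specialize (HP P (le_n _)). specialize (Hb P).
 unfold R_dist in HP. apply Rabs_def2 in HP. lra. Qed.

Lemma cv_ge u l b : Un_cv u l -> (forall p, b <= u p) -> b <= l.
Proof. intros H Hb. destruct (Rle_dec b l) as [|N]; auto. exfalso.
 destruct (H (b - l)) as [P HP]. lra. specialize (HP P (le_n _)). specialize (Hb P).
 unfold R_dist in HP. apply Rabs_def2 in HP. lra. Qed.

Lemma cv_le_ev u l b N : Un_cv u l -> (forall p, (p >= N)%nat -> u p <= b) -> l <= b.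
Proof. intros H Hb. destruct (Rle_dec l b) as [|Nn]; auto. exfalso.
 destruct (H (l - b)) as [P HP]. lra. specialize (HP (max P N) ltac:(lia)). specialize (Hb (max P N) ltac:(lia)).
 unfold R_dist in HP. apply Rabs_def2 in HP. lra. Qed.

Lemma cv_ge_ev u l b N : Un_cv u l -> (forall p, (p >= N)%nat -> b <= u p) -> b <= l.
Proof. intros H Hb. destruct (Rle_dec b l) as [|Nn]; auto. exfalso.
 destruct (H (b - l)) as [P HP]. lra. specialize (HP (max P N) ltac:(lia)). specialize (Hb (max P N) ltac:(lia)).
 unfold R_dist in HP. apply Rabs_def2 in HP. lra. Qed.

Lemma cv_const r : Un_cv (fun _ => r) r.
Proof. intros e He; exists O; intros; unfold R_dist; rewrite Rminus_diag, Rabs_R0; auto. Qed.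

Definition psdS (S : Pt -> Prop) (K : kernel) : Prop :=
  (forall x y, S x -> S y -> K x y = K y x) /\
  forall m c x, (forall i, (i < m)%nat -> S (x i)) -> 0 <= QF m c (fun i j => K (x i) (x j)).

Definition kle S (A B : kernel) := psdS S (fun x y => B x y - A x y).
Definition rank1 (h : Pt -> R) : kernel := fun x y => h x * h y.

Section K.
Variable S : Pt -> Prop.

Lemma psd_ext K K' : (forall x y, S x -> S y -> K x y = K' x y) -> psdS S K -> psdS S K'.
Proof. intros E [H1 H2]. split. intros; rewrite <- !E; auto.
 intros m c x Hx. rewrite (QF_ext m c c _ (fun i j => K (x i) (x j))). auto. auto.
 intros; rewrite E; auto. Qed.

Lemma psd_add A B : psdS S A -> psdS S B -> psdS S (fun x y => A x y + B x y).
Proof. intros [H1 H2] [H3 H4]. split. intros; rewrite H1, H3; auto.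
 intros m c x Hx. rewrite (QF_plus m c (fun i j => A (x i) (x j)) (fun i j => B (x i) (x j))).
 specialize (H2 m c x Hx). specialize (H4 m c x Hx). lra. Qed.

Lemma psd_scale r A : 0 <= r -> psdS S A -> psdS S (fun x y => r * A x y).
Proof. intros Hr [H1 H2]. split. intros; rewrite H1; auto.
 intros m c x Hx. rewrite (QF_scal m c r (fun i j => A (x i) (x j))).
 specialize (H2 m c x Hx). apply Rmult_le_pos; auto. Qed.

Lemma psd_rank1 h : psdS S (rank1 h).
Proof. split. intros; unfold rank1; lra. intros m c x Hx. unfold rank1.
 rewrite (QF_rank1 m c (fun i => h (x i))). apply pow2_ge_0. Qed.

Lemma psd_const r : 0 <= r -> psdS S (fun _ _ => r).
Proof. intros Hr. apply (psd_ext (fun x y => r * rank1 (fun _ => 1) x y)). intros; unfold rank1; lra.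
 apply psd_scale; auto. apply psd_rank1. Qed.

Lemma psd_mul A B : psdS S A -> psdS S B -> psdS S (fun x y => A x y * B x y).
Proof. intros [H1 H2] [H3 H4]. split. intros; rewrite H1, H3; auto.
 intros m c x Hx. apply (schur m (fun i j => A (x i) (x j)) (fun i j => B (x i) (x j))).
 intros i j Hi Hj; apply H1; auto. intros c0; apply H2; auto. intros c0; apply H4; auto. Qed.

Lemma psd_rsum p F : (forall t, (t < p)%nat -> psdS S (F t)) -> psdS S (fun x y => rsum p (fun t => F t x y)).
Proof. induction p; intros H; simpl. apply psd_const; lra.
 apply psd_add. apply IHp; intros; apply H; lia. apply H; lia. Qed.

Lemma psd_limit (F : nat -> kernel) K : (forall p, psdS S (F p)) ->
  (forall x y, S x -> S y -> Un_cv (fun p => F p x y) (K x y)) -> psdS S K.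
Proof. intros H Hc. split.
 - intros x y Hx Hy. apply (UL_sequence (fun p => F p x y)). auto.
   apply (Un_cv_ext (fun p => F p y x)). intros; destruct (H n) as [H1 _]; rewrite H1; auto. auto.
 - intros m c x Hx. apply (cv_ge (fun p => QF m c (fun i j => F p (x i) (x j)))).
   apply QF_cv. intros; apply Hc; auto. intros p; destruct (H p) as [_ H2]; auto. Qed.

Lemma psd_pow K t : psdS S K -> psdS S (fun x y => K x y ^ t).
Proof. intros H. induction t. simpl. apply psd_const; lra.
 apply (psd_ext (fun x y => K x y * K x y ^ t)). intros; simpl; auto. apply psd_mul; auto. Qed.

Lemma kle_refl A : (forall x y, S x -> S y -> A x y = A y x) -> kle S A A.
Proof. intros H. unfold kle. apply (psd_ext (fun _ _ => 0)). intros; lra. apply psd_const; lra. Qed.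

Lemma kle_trans A B C : kle S A B -> kle S B C -> kle S A C.
Proof. intros H1 H2. unfold kle. apply (psd_ext (fun x y => (B x y - A x y) + (C x y - B x y))).
 intros; lra. apply psd_add; auto. Qed.

Lemma kle_add A B A' B' : kle S A A' -> kle S B B' -> kle S (fun x y => A x y + B x y) (fun x y => A' x y + B' x y).
Proof. intros H1 H2. unfold kle. apply (psd_ext (fun x y => (A' x y - A x y) + (B' x y - B x y))).
 intros; lra. apply psd_add; auto. Qed.

Lemma kle_scale r A B : 0 <= r -> kle S A B -> kle S (fun x y => r * A x y) (fun x y => r * B x y).
Proof. intros Hr H. unfold kle. apply (psd_ext (fun x y => r * (B x y - A x y))).
 intros; lra. apply psd_scale; auto. Qed.

Lemma kle_psd A B : psdS S A -> kle S A B -> psdS S B.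
Proof. intros H1 H2. apply (psd_ext (fun x y => A x y + (B x y - A x y))). intros; lra. apply psd_add; auto. Qed.

Lemma psd_kle0 A : psdS S A -> kle S (fun _ _ => 0) A.
Proof. intros H. unfold kle. apply (psd_ext A). intros; lra. auto. Qed.

Lemma kle_addr A B : psdS S A -> psdS S B -> kle S A (fun x y => A x y + B x y).
Proof. intros H1 H2. unfold kle. apply (psd_ext B). intros; lra. auto. Qed.

Lemma kle_ext A B A' B' : (forall x y, S x -> S y -> A x y = A' x y) -> (forall x y, S x -> S y -> B x y = B' x y) ->
  kle S A B -> kle S A' B'.
Proof. intros E1 E2 H. unfold kle. apply (psd_ext (fun x y => B x y - A x y)). intros; rewrite E1, E2; auto. auto. Qed.

Lemma kle_mul A B A' B' : psdS S A -> kle S A A' -> psdS S B -> kle S B B' ->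
  kle S (fun x y => A x y * B x y) (fun x y => A' x y * B' x y).
Proof. intros HA HAA HB HBB. assert (HB' : psdS S B') by (apply (kle_psd B B'); auto).
 unfold kle. apply (psd_ext (fun x y => (A' x y - A x y) * B' x y + A x y * (B' x y - B x y))).
 intros; ring. apply psd_add; apply psd_mul; auto. Qed.

Lemma kle_pow A B t : psdS S A -> kle S A B -> kle S (fun x y => A x y ^ t) (fun x y => B x y ^ t).
Proof. intros HA HAB. induction t.
 - simpl. apply kle_refl. auto.
 - apply (kle_ext (fun x y => A x y * A x y ^ t) (fun x y => B x y * B x y ^ t)). intros; auto. intros; auto.
   apply kle_mul; auto. apply psd_pow; auto. Qed.

End K.

Lemma psd_QF S K m c x : psdS S K -> (forall i, (i < m)%nat -> S (x i)) -> 0 <= QF m c (fun i j => K (x i) (x j)).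
Proof. intros [_ H] Hx; apply H; auto. Qed.

Lemma isum_cv s l : infinite_sum s l -> Un_cv (fun M => rsum M s) l.
Proof. intros H e He. destruct (H e He) as [N HN]. exists (S N). intros M HM.
 destruct M. lia. rewrite <- rsum_sum_f. apply HN. lia. Qed.

Lemma sq_le_le x y : x^2 <= y^2 -> 0 <= y -> x <= y.
Proof. intros H1 H2. destruct (Rle_dec x y); auto. nra. Qed.

Lemma CSw M u v w : (forall t, 0 < v t) -> (forall t, 0 <= w t) -> (forall t, (u t)^2 <= v t * w t) ->
  (rsum M u)^2 <= rsum M v * rsum M w.
Proof. intros Hv Hw Huvw. induction M; simpl. lra.
 assert (HA : 0 <= rsum M v) by (apply rsum_nonneg; intros; apply Rlt_le; auto).
 assert (HB : 0 <= rsum M w) by (apply rsum_nonneg; auto).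
 specialize (Hv M); specialize (Hw M); specialize (Huvw M).
 set (A := rsum M v) in *; set (B := rsum M w) in *; set (C := rsum M u) in *.
 assert (2 * C * u M <= A * w M + v M * B).
 { apply sq_le_le. 2: nra.
   assert ((2 * C * u M)^2 = 4 * (C^2) * (u M)^2) by ring.
   assert (4 * C^2 * (u M)^2 <= 4 * (A * B) * (v M * w M)).
   { apply Rmult_le_compat. nra. nra. nra. auto. }
   assert ((A*w M + v M*B)^2 = 4*(A*B)*(v M*w M) + (A*w M - v M*B)^2) by ring.
   pose proof (pow2_ge_0 (A*w M - v M*B)). lra. }
 assert ((C+u M)^2 = C^2 + 2*C*u M + (u M)^2) by ring.
 assert ((A+v M)*(B + w M) = A*B + (A*w M + v M*B) + v M*w M) by ring. lra. Qed.

Lemma geom_half M : rsum M (fun t => (/2)^t) <= 2.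
Proof. assert (forall M, rsum M (fun t => (/2)^t) = 2 - 2 * (/2)^M).
 { induction M0; simpl. lra. rewrite IHM0. field. }
 rewrite H. pose proof (pow_le (/2) M ltac:(lra)). lra. Qed.

Section PS.
Variables (a : nat -> R) (f : R -> R).
Hypothesis Ha : forall t, 0 <= a t.
Hypothesis Hf : forall x, infinite_sum (fun t => a t * x ^ t) (f x).

Lemma ps_cv x : Un_cv (fun M => rsum M (fun t => a t * x ^ t)) (f x).
Proof. apply isum_cv; auto. Qed.

Lemma ps_partial_le x M : 0 <= x -> rsum M (fun t => a t * x ^ t) <= f x.
Proof. intros Hx. apply (cv_ge_ev _ _ _ M (ps_cv x)). intros p Hp. apply rsum_mono_len; auto.
 intros; apply Rmult_le_pos; auto. apply pow_le; auto. Qed.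

Lemma ps_nonneg x : 0 <= x -> 0 <= f x.
Proof. intros Hx. pose proof (ps_partial_le x 0 Hx). simpl in H. auto. Qed.

Lemma ps_abs x : Rabs (f x) <= f (Rabs x).
Proof. assert (forall M, Rabs (rsum M (fun t => a t * x ^ t)) <= f (Rabs x)).
 { intros M. eapply Rle_trans. apply rsum_abs. eapply Rle_trans. 2: apply (ps_partial_le _ M (Rabs_pos x)).
   apply rsum_le; intros. rewrite Rabs_mult, RPow_abs, (Rabs_right (a i)). lra. apply Rle_ge; auto. }
 apply Rabs_le. split.
 - apply (cv_ge _ _ _ (ps_cv x)). intros p. specialize (H p). apply Rabs_def2b in H. lra.
 - apply (cv_le _ _ _ (ps_cv x)). intros p. specialize (H p). apply Rabs_def2b in H. lra. Qed.

Lemma ps_mono x y : 0 <= x -> x <= y -> f x <= f y.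
Proof. intros H1 H2. apply (cv_le _ _ _ (ps_cv x)). intros p. eapply Rle_trans. 2: apply (ps_partial_le y p); lra.
 apply rsum_le; intros. apply Rmult_le_compat_l; auto. apply pow_incr; lra. Qed.

Lemma pow_diff_bound R0 x y t : 1 <= R0 -> Rabs x <= R0 -> Rabs y <= R0 ->
  Rabs (x ^ t - y ^ t) <= (2 * R0) ^ t * Rabs (x - y).
Proof. intros H1 Hx Hy. induction t. simpl. rewrite Rminus_diag, Rabs_R0. pose proof (Rabs_pos (x-y)); lra.
 replace (x ^ S t - y ^ S t) with (x * (x ^ t - y ^ t) + y ^ t * (x - y)) by (simpl; ring).
 eapply Rle_trans. apply Rabs_triang. rewrite !Rabs_mult.
 assert (Hyt : Rabs (y ^ t) <= R0 ^ t) by (rewrite <- RPow_abs; apply pow_incr; split; auto; apply Rabs_pos).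
 assert (HR : R0 ^ t <= (2 * R0) ^ t) by (apply pow_incr; lra).
 assert (0 <= Rabs (x - y)) by apply Rabs_pos.
 assert (0 <= Rabs (x ^ t - y ^ t)) by apply Rabs_pos.
 assert (0 <= R0 ^ t) by (apply pow_le; lra).
 simpl. assert (Rabs x * Rabs (x ^ t - y ^ t) <= R0 * ((2 * R0) ^ t * Rabs (x - y))).
 { apply Rmult_le_compat; auto. apply Rabs_pos. }
 assert (Rabs (y ^ t) * Rabs (x - y) <= (2 * R0) ^ t * Rabs (x - y)) by (apply Rmult_le_compat_r; lra).
 assert (0 <= (2*R0)^t) by (apply pow_le; lra).
 nra. Qed.

Lemma ps_lip R0 x y : 1 <= R0 -> Rabs x <= R0 -> Rabs y <= R0 -> Rabs (f x - f y) <= f (2 * R0) * Rabs (x - y).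
Proof. intros H1 Hx Hy.
 assert (Hc : Un_cv (fun M => rsum M (fun t => a t * x ^ t) - rsum M (fun t => a t * y ^ t)) (f x - f y)).
 { apply CV_minus; apply ps_cv. }
 assert (Hb : forall M, Rabs (rsum M (fun t => a t * x ^ t) - rsum M (fun t => a t * y ^ t)) <= f (2 * R0) * Rabs (x - y)).
 { intros M. rewrite <- rsum_minus. eapply Rle_trans. apply rsum_abs.
   eapply Rle_trans. 2: apply Rmult_le_compat_r. 3: apply (ps_partial_le (2*R0) M); lra. 2: apply Rabs_pos.
   rewrite <- rsum_scalr. apply rsum_le; intros.
   replace (a i * x ^ i - a i * y ^ i) with (a i * (x ^ i - y ^ i)) by ring.
   rewrite Rabs_mult, (Rabs_right (a i)) by (apply Rle_ge; auto). rewrite Rmult_assoc. apply Rmult_le_compat_l; auto.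
   apply pow_diff_bound; auto. }
 apply Rabs_le. split.
 - apply (cv_ge _ _ _ Hc). intros p. specialize (Hb p). apply Rabs_def2b in Hb. lra.
 - apply (cv_le _ _ _ Hc). intros p. specialize (Hb p). apply Rabs_def2b in Hb. lra. Qed.

Variable S : Pt -> Prop.

Lemma QF_series (K : kernel) m c (x : nat -> Pt) : Un_cv (fun M => rsum M (fun t => a t * QF m c (fun i j => K (x i) (x j) ^ t)))
   (QF m c (fun i j => f (K (x i) (x j)))).
Proof. apply (Un_cv_ext (fun M => QF m c (fun i j => rsum M (fun t => a t * K (x i) (x j) ^ t)))).
 intros M. rewrite (QF_rsum m c M (fun t i j => a t * K (x i) (x j) ^ t)). apply rsum_ext; intros.
 rewrite <- QF_scal. auto.
 apply QF_cv. intros; apply ps_cv. Qed.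

Lemma psd_series K : psdS S K -> psdS S (fun x y => f (K x y)).
Proof. intros HK. split. intros x y Hx Hy. destruct HK as [H1 _]. rewrite H1; auto.
 intros m c x Hx. apply (cv_ge _ _ _ (QF_series K m c x)). intros p. apply rsum_nonneg; intros.
 apply Rmult_le_pos; auto. apply (psd_QF S (fun x y => K x y ^ _)); [apply psd_pow|]; auto. Qed.

Lemma series_ge K M w : psdS S K -> (forall t, (t < M)%nat -> 0 <= w t <= a t) ->
  kle S (fun x y => rsum M (fun t => w t * K x y ^ t)) (fun x y => f (K x y)).
Proof. intros HK Hw. split.
 - intros x y Hx Hy. destruct HK as [H1 _]. rewrite (H1 x y) by auto. auto.
 - intros m c x Hx. rewrite QF_minus. rewrite (QF_rsum m c M (fun t i j => w t * K (x i) (x j) ^ t)).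
   assert (HQ : forall t, 0 <= QF m c (fun i j => K (x i) (x j) ^ t)) by (intros; apply (psd_QF S (fun x y => K x y ^ _)); [apply psd_pow|]; auto).
   assert (rsum M (fun t => QF m c (fun i j => w t * K (x i) (x j) ^ t)) <= QF m c (fun i j => f (K (x i) (x j)))).
   { apply (cv_ge_ev _ _ _ M (QF_series K m c x)). intros p Hp.
     apply Rle_trans with (rsum M (fun t => a t * QF m c (fun i j => K (x i) (x j) ^ t))).
     apply rsum_le; intros. rewrite QF_scal. apply Rmult_le_compat_r; auto. apply Hw; auto.
     apply rsum_mono_len; auto. intros; apply Rmult_le_pos; auto. }
   lra. Qed.

End PS.

Definition Hb S K (h : Pt -> R) := exists c, 0 <= c /\ kle S (rank1 h) (fun x y => c * K x y).

Lemma ps_Hb (b : nat -> R) (sg f : R -> R) S K h :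
  (forall x, infinite_sum (fun t => b t * x ^ t) (sg x)) ->
  (forall x, infinite_sum (fun t => Rabs (b t) * x ^ t) (f x)) ->
  psdS S K -> Hb S K h -> Hb S (fun x y => f (K x y)) (fun x => sg (h x)).
Proof. intros Hsg Hf HK [c [Hc Hh]].
 assert (Ha : forall t, 0 <= Rabs (b t)) by (intros; apply Rabs_pos).
 exists (f c + 2). split. pose proof (ps_nonneg _ _ Ha Hf c Hc); lra.
 split.
 - intros x y Hx Hy. unfold rank1. destruct HK as [H1 _]. rewrite H1 by auto. ring.
 - intros m g x Hx. rewrite QF_minus, QF_scal. unfold rank1.
   rewrite (QF_rank1 m g (fun i => sg (h (x i)))).
   set (Q := fun t => QF m g (fun i j => K (x i) (x j) ^ t)).
   set (H := fun t => rsum m (fun i => g i * h (x i) ^ t)).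
   assert (HQ : forall t, 0 <= Q t) by (intros; unfold Q; apply (psd_QF S (fun x y => K x y ^ _)); [apply psd_pow|]; auto).
   assert (HHQ : forall t, (H t)^2 <= c ^ t * Q t).
   { intros t. pose proof (kle_pow S _ _ t (psd_rank1 S h) Hh) as Hp. destruct Hp as [_ Hp].
     specialize (Hp m g x Hx). rewrite QF_minus in Hp.
     rewrite (QF_ext m g g (fun i j => (c * K (x i) (x j)) ^ t) (fun i j => c ^ t * K (x i) (x j) ^ t)) in Hp by (intros; cbv beta; try rewrite Rpow_mult_distr; auto).
     rewrite (QF_ext m g g (fun i j => (rank1 h (x i) (x j)) ^ t) (fun i j => h (x i) ^ t * h (x j) ^ t)) in Hp
       by (intros; cbv beta; unfold rank1; try rewrite Rpow_mult_distr; auto).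
     rewrite QF_scal, QF_rank1 in Hp. unfold Q, H. lra. }
   set (lam := fun t => Rabs (b t) * c ^ t + (/2)^t).
   assert (Hlam : forall t, 0 < lam t).
   { intros t. unfold lam. assert (0 < (/2)^t) by (apply pow_lt; lra).
     assert (0 <= Rabs (b t) * c ^ t) by (apply Rmult_le_pos; auto; apply pow_le; auto). lra. }
   assert (HQF : forall M, rsum M (fun t => Rabs (b t) * Q t) <= QF m g (fun i j => f (K (x i) (x j)))).
   { intros M. apply (cv_ge_ev _ _ _ M (QF_series _ _ Hf K m g x)). intros p Hp.
     apply rsum_mono_len; [intros; apply Rmult_le_pos; [apply Ha | apply HQ] | lia]. }
   assert (Hlsum : forall M, rsum M lam <= f c + 2).
   { intros M. unfold lam. rewrite (rsum_plus M (fun t => Rabs (b t) * c ^ t) (fun t => (/2)^t)). pose proof (geom_half M).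
     pose proof (ps_partial_le _ _ Ha Hf c M Hc). lra. }
   assert (HM : forall M, (rsum M (fun t => b t * H t))^2 <= (f c + 2) * QF m g (fun i j => f (K (x i) (x j)))).
   { intros M. eapply Rle_trans. apply (CSw M _ lam (fun t => Rabs (b t) * Q t)); auto.
     intros; apply Rmult_le_pos; auto.
     intros t. specialize (HHQ t). unfold lam.
     assert (Hbt : (b t)^2 = (Rabs (b t))^2) by (unfold Rabs; destruct (Rcase_abs (b t)); ring).
     assert (0 <= c ^ t) by (apply pow_le; auto). assert (0 <= (/2)^t) by (apply pow_le; lra).
     specialize (HQ t). specialize (Ha t).
     assert ((b t * H t)^2 = (b t)^2 * (H t)^2) by ring.
     assert ((b t)^2 * (H t)^2 <= (b t)^2 * (c ^ t * Q t)) by (apply Rmult_le_compat_l; auto; apply pow2_ge_0).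
     assert (0 <= (/2)^t * (Rabs (b t) * Q t)) by (apply Rmult_le_pos; auto; apply Rmult_le_pos; auto).
     nra.
     apply Rmult_le_compat; auto. apply rsum_nonneg; intros; apply Rlt_le; auto.
     apply rsum_nonneg; intros; apply Rmult_le_pos; auto. }
   assert (Hcv : Un_cv (fun M => (rsum M (fun t => b t * H t))^2) ((rsum m (fun i => g i * sg (h (x i))))^2)).
   { apply (Un_cv_ext (fun M => rsum M (fun t => b t * H t) * rsum M (fun t => b t * H t))). intros; simpl; ring.
     replace ((rsum m (fun i => g i * sg (h (x i))))^2) with (rsum m (fun i => g i * sg (h (x i))) * rsum m (fun i => g i * sg (h (x i)))) by ring.
     assert (Hc1 : Un_cv (fun M => rsum M (fun t => b t * H t)) (rsum m (fun i => g i * sg (h (x i))))).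
     { apply (Un_cv_ext (fun M => rsum m (fun i => g i * rsum M (fun t => b t * h (x i) ^ t)))).
       intros M. unfold H. rewrite (rsum_ext M _ (fun t => rsum m (fun i => g i * h (x i) ^ t * b t))).
       rewrite <- rsum_swap. apply rsum_ext; intros. rewrite <- rsum_scal. apply rsum_ext; intros; ring.
       intros; rewrite <- rsum_scal; apply rsum_ext; intros; ring.
       apply (rsum_cv m (fun M i => g i * rsum M (fun t => b t * h (x i) ^ t))). intros i Hi.
       apply CV_mult. apply cv_const. apply isum_cv; auto. }
     apply CV_mult; auto. }
   pose proof (cv_le _ _ _ Hcv HM). lra.
Qed.

Lemma inv_small e : 0 < e -> exists M, forall p, (p >= M)%nat -> / (INR p + 1) < e.
Proof. intros He. destruct (archimed_cor1 e He) as [N [H1 H2]]. exists N. intros p Hp.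
 assert (0 < INR N) by (apply lt_0_INR; auto). assert (INR N <= INR p) by (apply le_INR; auto).
 eapply Rle_lt_trans. 2: apply H1. apply Rinv_le_contravar; lra. Qed.

Definition sel {T} (m1 : nat) (u v : nat -> T) (i : nat) : T := if Nat.ltb i m1 then u i else v (i - m1)%nat.
Lemma sel_l {T} m1 (u v : nat -> T) i : (i < m1)%nat -> sel m1 u v i = u i.
Proof. intros H; unfold sel. destruct (Nat.ltb_spec i m1); auto; lia. Qed.
Lemma sel_r {T} m1 (u v : nat -> T) i : sel m1 u v (m1 + i)%nat = v i.
Proof. unfold sel. destruct (Nat.ltb_spec (m1 + i) m1). lia. f_equal; lia. Qed.

Definition capp (h g : combo) : combo := Combo (cm h + cm g) (sel (cm h) (ca h) (ca g)) (sel (cm h) (cy h) (cy g)).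
Definition cscl (r : R) (h : combo) : combo := Combo (cm h) (fun i => r * ca h i) (cy h).
Definition cpt (t : R) (x : Pt) : combo := Combo 1 (fun _ => t) (fun _ => x).

Section Crit.
Variables (S : Pt -> Prop) (K : kernel) (f : Pt -> R).
Hypothesis HK : psdS S K.
Hypothesis Hf : Hb S K f.

Definition Lf (h : combo) := rsum (cm h) (fun i => ca h i * f (cy h i)).
Definition J (h : combo) := 2 * Lf h - bil K h h.

Lemma rsum_sel m1 m2 (F : nat -> R) (G : nat -> R) (H : nat -> nat -> R) :
  rsum (m1 + m2) (fun i => H i i) = rsum m1 (fun i => H i i) + rsum m2 (fun i => H (m1 + i)%nat (m1 + i)%nat).
Proof. apply rsum_app. Qed.

Lemma Lf_app h g : Lf (capp h g) = Lf h + Lf g.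
Proof. unfold Lf, capp; simpl. rewrite rsum_app. f_equal.
 apply rsum_ext; intros. rewrite !sel_l; auto.
 apply rsum_ext; intros. rewrite !sel_r; auto. Qed.

Lemma Lf_scl r h : Lf (cscl r h) = r * Lf h.
Proof. unfold Lf, cscl; simpl. rewrite <- rsum_scal. apply rsum_ext; intros; ring. Qed.

Lemma Lf_pt t x : Lf (cpt t x) = t * f x.
Proof. unfold Lf, cpt; simpl. ring. Qed.

Lemma bil_app_l h g k : bil K (capp h g) k = bil K h k + bil K g k.
Proof. unfold bil, capp; simpl. rewrite rsum_app. f_equal.
 apply rsum_ext; intros. apply rsum_ext; intros. rewrite !sel_l; auto.
 apply rsum_ext; intros. apply rsum_ext; intros. rewrite !sel_r; auto. Qed.

Lemma bil_app_r h g k : bil K k (capp h g) = bil K k h + bil K k g.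
Proof. unfold bil, capp; simpl. rewrite <- rsum_plus. apply rsum_ext; intros.
 rewrite rsum_app. f_equal.
 apply rsum_ext; intros. rewrite !sel_l; auto.
 apply rsum_ext; intros. rewrite !sel_r; auto. Qed.

Lemma bil_scl_l r h k : bil K (cscl r h) k = r * bil K h k.
Proof. unfold bil, cscl; simpl. rewrite <- rsum_scal. apply rsum_ext; intros.
 rewrite <- rsum_scal. apply rsum_ext; intros. ring. Qed.

Lemma bil_scl_r r h k : bil K k (cscl r h) = r * bil K k h.
Proof. unfold bil, cscl; simpl. rewrite <- rsum_scal. apply rsum_ext; intros.
 rewrite <- rsum_scal. apply rsum_ext; intros. ring. Qed.

Lemma bil_sym h g : combo_in S h -> combo_in S g -> bil K h g = bil K g h.
Proof. intros H1 H2. unfold bil. rewrite rsum_swap. apply rsum_ext; intros. apply rsum_ext; intros.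
 destruct HK as [Hs _]. rewrite Hs by auto. ring. Qed.

Lemma bil_pt_r h t x : combo_in S h -> S x -> bil K h (cpt t x) = t * combo_eval K h x.
Proof. intros H1 H2. unfold bil, combo_eval, cpt; simpl. rewrite <- rsum_scal. apply rsum_ext; intros.
 destruct HK as [Hs _]. rewrite Hs by auto. ring. Qed.

Lemma bil_pt_pt t x : bil K (cpt t x) (cpt t x) = t * t * K x x.
Proof. unfold bil, cpt; simpl. ring. Qed.

Lemma combo_in_app h g : combo_in S h -> combo_in S g -> combo_in S (capp h g).
Proof. intros H1 H2 i Hi. simpl in *. destruct (Nat.ltb_spec i (cm h)).
 rewrite sel_l; auto. replace i with (cm h + (i - cm h))%nat by lia. rewrite sel_r. apply H2; lia. Qed.

Lemma combo_in_scl r h : combo_in S h -> combo_in S (cscl r h).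
Proof. intros H i Hi; apply H; auto. Qed.

Lemma combo_in_pt t x : S x -> combo_in S (cpt t x).
Proof. intros H i Hi; auto. Qed.

Lemma bil_nonneg h : combo_in S h -> 0 <= bil K h h.
Proof. intros H. apply (psd_QF S K (cm h) (ca h) (cy h)); auto. Qed.

Lemma J_bound : exists C, forall h, combo_in S h -> J h <= C.
Proof. destruct Hf as [c [Hc Hk]]. exists (c + 1). intros h Hh.
 pose proof (psd_QF S _ (cm h) (ca h) (cy h) Hk Hh) as H. cbv beta in H. rewrite QF_minus, QF_scal in H. unfold rank1 in H.
 rewrite (QF_rank1 (cm h) (ca h) (fun i => f (cy h i))) in H.
 pose proof (bil_nonneg h Hh). unfold J, Lf.
 change (QF (cm h) (ca h) (fun i j => K (cy h i) (cy h j))) with (bil K h h) in H.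
 set (L := rsum (cm h) (fun i => ca h i * f (cy h i))) in *. set (B := bil K h h) in *.
 assert ((c + 1) * (2 * L - B) <= (c+1) * (c + 1)).
 { assert ((c+1) * B >= L^2) by nra. assert ((L - (c+1))^2 >= 0) by (apply Rle_ge, pow2_ge_0). nra. }
 apply (Rmult_le_reg_l (c+1)); lra. Qed.

Definition Eset (r : R) := exists h, combo_in S h /\ r = J h.

Lemma main_crit : in_RKHS S K f.
Proof.
 destruct J_bound as [C HC].
 assert (Hb1 : bound Eset) by (exists C; intros r [h [Hh ->]]; auto).
 assert (He1 : exists r, Eset r).
 { exists (J (Combo 0 (fun _ => 0) (fun _ => fun _ _ => 0))). exists (Combo 0 (fun _ => 0) (fun _ => fun _ _ => 0)).
   split; auto. intros i Hi; simpl in Hi; lia. }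
 destruct (completeness Eset Hb1 He1) as [Ss [HS1 HS2]].
 assert (Hnear : forall p, exists h, combo_in S h /\ Ss - / (INR p + 1) < J h).
 { intros p. destruct (classic (exists h, combo_in S h /\ Ss - / (INR p + 1) < J h)) as [|N]; auto.
   exfalso. assert (is_upper_bound Eset (Ss - / (INR p + 1))).
   { intros r [h [Hh ->]]. destruct (Rle_dec (J h) (Ss - / (INR p + 1))) as [|N2]; auto.
     exfalso; apply N. exists h; split; auto; lra. }
   specialize (HS2 _ H). assert (0 < / (INR p + 1)). apply Rinv_0_lt_compat. pose proof (pos_INR p); lra. lra. }
 set (hs := fun p => proj1_sig (constructive_indefinite_description _ (Hnear p))).
 assert (Hhs : forall p, combo_in S (hs p) /\ Ss - / (INR p + 1) < J (hs p)).
 { intros p. unfold hs. destruct (constructive_indefinite_description _ (Hnear p)); auto. }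
 assert (HJle : forall h, combo_in S h -> J h <= Ss) by (intros h Hh; apply HS1; exists h; auto).
 exists hs. split; [intros p; apply Hhs|]. split.
 - intros eps Heps. destruct (inv_small (eps / 4)) as [M HM]. lra. exists M. intros p q Hp Hq.
   destruct (Hhs p) as [Hp1 Hp2]. destruct (Hhs q) as [Hq1 Hq2].
   set (mid := capp (cscl (/2) (hs p)) (cscl (/2) (hs q))).
   assert (Hmid : combo_in S mid) by (apply combo_in_app; apply combo_in_scl; auto).
   pose proof (HJle mid Hmid) as Hm.
   assert (HJm : J mid = (J (hs p) + J (hs q)) / 2 + norm2_diff K (hs p) (hs q) / 4).
   { unfold J, mid, norm2_diff. rewrite Lf_app, !Lf_scl. rewrite !bil_app_l, !bil_app_r, !bil_scl_l, !bil_scl_r.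
     rewrite (bil_sym (hs q) (hs p)) by auto. field. }
   specialize (HM p Hp) as HMp. specialize (HM q Hq) as HMq. lra.
 - intros x Hx eps Heps.
   set (kap := K x x).
   assert (Hkap : 0 <= kap).
   { pose proof (bil_nonneg (cpt 1 x) (combo_in_pt 1 x Hx)) as Hk0. rewrite bil_pt_pt in Hk0. unfold kap; lra. }
   assert (Hk1 : forall p, (f x - combo_eval K (hs p) x)^2 <= (kap + 1) * / (INR p + 1)).
   { intros p. destruct (Hhs p) as [Hp1 Hp2].
     set (e := f x - combo_eval K (hs p) x). set (t := e / (kap + 1)).
     pose proof (HJle (capp (hs p) (cpt t x)) (combo_in_app _ _ Hp1 (combo_in_pt t x Hx))) as Hm.
     unfold J in Hm. rewrite Lf_app, Lf_pt, bil_app_l, !bil_app_r, bil_pt_pt in Hm.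
     rewrite (bil_sym (cpt t x) (hs p)) in Hm by (auto; apply combo_in_pt; auto).
     rewrite bil_pt_r in Hm by auto. unfold J in Hp2. fold kap in Hm.
     assert (2 * t * e - t * t * kap < / (INR p + 1)) by (unfold e in *; lra).
     assert (e^2 / (kap + 1) <= 2 * t * e - t * t * kap).
     { replace (2 * t * e - t * t * kap) with (e^2 / (kap + 1) + e^2 / ((kap + 1)^2)) by (unfold t; field; lra).
       assert (0 <= e^2 / ((kap + 1)^2)). unfold Rdiv; apply Rmult_le_pos. apply pow2_ge_0. apply Rlt_le, Rinv_0_lt_compat, pow_lt; lra. lra. }
     assert (Hpos : 0 < kap + 1) by lra.
     assert (e^2 / (kap + 1) < / (INR p + 1)) by lra.
     apply (Rmult_lt_compat_l (kap+1)) in H1; auto. unfold Rdiv in H1. 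
     replace ((kap + 1) * (e ^ 2 * / (kap + 1))) with (e^2) in H1 by (field; lra). lra. }
   assert (Hpe : 0 < eps^2 / (kap + 1)) by (apply Rdiv_lt_0_compat; [apply pow_lt|]; lra).
   destruct (inv_small _ Hpe) as [M HM].
   exists M. intros p Hp. unfold R_dist. specialize (HM p Hp). specialize (Hk1 p).
   assert ((combo_eval K (hs p) x - f x)^2 < eps^2).
   { replace ((combo_eval K (hs p) x - f x)^2) with ((f x - combo_eval K (hs p) x)^2) by ring.
     eapply Rle_lt_trans. apply Hk1. apply (Rmult_lt_compat_l (kap+1)) in HM. 2: lra.
     replace ((kap + 1) * (eps ^ 2 / (kap + 1))) with (eps^2) in HM by (field; lra). lra. }
   rewrite <- (Rabs_right eps) by lra. apply Rsqr_lt_abs_0. unfold Rsqr. simpl in H. lra.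
Qed.

End Crit.

Section HbAlg.
Variable S : Pt -> Prop.

Lemma Hb_ext K K' h h' : (forall x y, S x -> S y -> K x y = K' x y) -> (forall x, S x -> h x = h' x) -> Hb S K h -> Hb S K' h'.
Proof. intros E1 E2 [c [Hc H]]. exists c; split; auto. eapply kle_ext. 3: apply H.
 intros; unfold rank1; rewrite !E2; auto. intros; cbv beta; rewrite E1; auto. Qed.

Lemma Hb_mono_sc K K' h r : Hb S K h -> 0 <= r -> kle S K (fun x y => r * K' x y) -> Hb S K' h.
Proof. intros [c [Hc H]] Hr Hk. exists (c * r). split. apply Rmult_le_pos; auto.
 eapply kle_trans. apply H. eapply kle_ext. 3: apply (kle_scale S c _ _ Hc Hk). intros; auto. intros; cbv beta; ring. Qed.

Lemma Hb_mono K K' h : Hb S K h -> kle S K K' -> Hb S K' h.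
Proof. intros H Hk. apply (Hb_mono_sc K K' h 1); auto. lra. eapply kle_ext. 3: apply Hk. intros; auto. intros; ring. Qed.

Lemma Hb_add K h g : Hb S K h -> Hb S K g -> Hb S K (fun x => h x + g x).
Proof. intros [c1 [Hc1 H1]] [c2 [Hc2 H2]]. exists (2 * c1 + 2 * c2). split. lra.
 assert (H3 : kle S (rank1 (fun x => h x + g x)) (fun x y => 2 * rank1 h x y + 2 * rank1 g x y)).
 { unfold kle. apply (psd_ext S (rank1 (fun x => h x - g x))). intros; unfold rank1; ring. apply psd_rank1. }
 eapply kle_trans. apply H3. eapply kle_ext. 3: apply (kle_add S _ _ _ _ (kle_scale S 2 _ _ ltac:(lra) H1) (kle_scale S 2 _ _ ltac:(lra) H2)).
 intros; auto. intros; cbv beta; ring. Qed.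

Lemma Hb_scal K h r : Hb S K h -> Hb S K (fun x => r * h x).
Proof. intros [c [Hc H]]. exists (r * r * c). split. apply Rmult_le_pos; auto. nra.
 eapply kle_ext. 3: apply (kle_scale S (r * r) _ _ ltac:(nra) H). intros; unfold rank1; ring. intros; cbv beta; ring. Qed.

Lemma Hb_zero K : (forall x y, S x -> S y -> K x y = K y x) -> Hb S K (fun _ => 0).
Proof. intros Hs. exists 0. split. lra. unfold kle. apply (psd_ext S (fun _ _ => 0)). intros; unfold rank1; ring.
 apply psd_const; lra. Qed.

Lemma Hb_rsum K m F : (forall x y, S x -> S y -> K x y = K y x) -> (forall i, (i < m)%nat -> Hb S K (F i)) ->
  Hb S K (fun x => rsum m (fun i => F i x)).
Proof. intros Hs. induction m; intros H; simpl. apply Hb_zero; auto.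
 apply (Hb_add K (fun x => rsum m (fun i => F i x)) (F m)). apply IHm; intros; apply H; lia. apply H; lia. Qed.

Lemma Hb_mul A B h g : psdS S A -> psdS S B -> Hb S A h -> Hb S B g -> Hb S (fun x y => A x y * B x y) (fun x => h x * g x).
Proof. intros HA HB [c1 [Hc1 H1]] [c2 [Hc2 H2]]. exists (c1 * c2). split. apply Rmult_le_pos; auto.
 eapply kle_ext. 3: apply (kle_mul S _ _ _ _ (psd_rank1 S h) H1 (psd_rank1 S g) H2).
 intros; unfold rank1; ring. intros; cbv beta; ring. Qed.

Lemma Hb_const r : Hb S (fun _ _ => 1) (fun _ => r).
Proof. exists (r * r). split. nra. unfold kle. apply (psd_ext S (fun _ _ => 0)). intros; unfold rank1; ring. apply psd_const; lra. Qed.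

End HbAlg.

Lemma isum_ext s s' l : (forall t, s t = s' t) -> infinite_sum s l -> infinite_sum s' l.
Proof. intros E H e He. destruct (H e He) as [N HN]. exists N. intros p Hp.
 rewrite rsum_sum_f. rewrite <- (rsum_ext (S p) s s') by auto. rewrite <- rsum_sum_f. auto. Qed.

Definition Lk (d : nat) (i : nat) : kernel := fun X Y => rsum d (fun k => X i k * Y i k).
Definition K1 (d n : nat) (f : nat -> R -> R) : kernel := fun X Y => rsum n (fun i => f 1%nat (Lk d i X Y)).
Definition Gk (d n : nat) (f : nat -> R -> R) (k : nat) : kernel := fun X Y => fcomp f (k - 1) (K1 d n f X Y).

Lemma Gk_S d n f k X Y : (1 <= k)%nat -> Gk d n f (S k) X Y = f (S k) (Gk d n f k X Y).
Proof. intros H. destruct k. lia. unfold Gk. simpl. replace (k - 0)%nat with k by lia. auto. Qed.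

Section Kern.
Variables (S : Pt -> Prop) (d : nat).

Lemma psd_Lk i : psdS S (Lk d i).
Proof. unfold Lk. apply (psd_rsum S d (fun k => rank1 (fun X => X i k))). intros; apply psd_rank1. Qed.

Lemma Hb_coord i k : (k < d)%nat -> Hb S (Lk d i) (fun X => X i k).
Proof. intros Hk. exists 1. split. lra. unfold kle.
 apply (psd_ext S (fun X Y => rsum d (fun k' => if Nat.eqb k' k then 0 else rank1 (fun X => X i k') X Y))).
 intros x y _ _. unfold Lk, rank1. rewrite (rsum_remove d k (fun k0 => x i k0 * y i k0)) by auto. ring.
 apply psd_rsum. intros t Ht. destruct (Nat.eqb t k). apply psd_const; lra. apply psd_rank1. Qed.

Lemma Hb_lin i (w : nat -> R) : Hb S (Lk d i) (fun X => rsum d (fun m => X i m * w m)).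
Proof. apply Hb_rsum. intros; destruct (psd_Lk i) as [Hs _]; auto.
 intros m Hm. apply (Hb_ext S (Lk d i) (Lk d i) (fun X => w m * X i m)). auto. intros; ring.
 apply Hb_scal. apply Hb_coord; auto. Qed.

End Kern.

Section Main.
Variables (Sp : Pt -> Prop) (d n N : nat) (f : nat -> R -> R) (a b : nat -> nat -> R) (sigma : nat -> R -> R).
Hypothesis Hab : forall i t, a i t = Rabs (b i t).
Hypothesis Hfs : forall i x, (1 <= i <= N)%nat -> infinite_sum (fun t => a i t * x ^ t) (f i x).
Hypothesis Hsig : forall i x, (1 <= i <= N)%nat -> infinite_sum (fun t => b i t * x ^ t) (sigma i x).
Hypothesis HN : (1 <= N)%nat.

Lemma Ha i t : 0 <= a i t.
Proof. rewrite Hab; apply Rabs_pos. Qed.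

Lemma psd_f1Lk i : psdS Sp (fun X Y => f 1%nat (Lk d i X Y)).
Proof. apply (psd_series (a 1%nat) (f 1%nat) (Ha 1%nat) (fun x => Hfs 1%nat x ltac:(lia)) Sp). apply psd_Lk. Qed.

Lemma psd_K1 : psdS Sp (K1 d n f).
Proof. unfold K1. apply (psd_rsum Sp n (fun i X Y => f 1%nat (Lk d i X Y))). intros; apply psd_f1Lk. Qed.

Lemma psd_Gk k : (1 <= k <= N)%nat -> psdS Sp (Gk d n f k).
Proof. induction k; intros Hk. lia. destruct k.
 - apply (psd_ext Sp (K1 d n f)). intros; unfold Gk; simpl; auto. apply psd_K1.
 - apply (psd_ext Sp (fun X Y => f (S (S k)) (Gk d n f (S k) X Y))). intros; rewrite (Gk_S d n f (S k)); auto; lia.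
   apply (psd_series (a (S (S k))) (f (S (S k))) (Ha _) (fun x => Hfs _ x Hk) Sp). apply IHk; lia. Qed.

Lemma f1Lk_le_K1 q : (q < n)%nat -> kle Sp (fun X Y => f 1%nat (Lk d q X Y)) (K1 d n f).
Proof. intros Hq. unfold kle.
 apply (psd_ext Sp (fun X Y => rsum n (fun i => if Nat.eqb i q then 0 else f 1%nat (Lk d i X Y)))).
 intros x y _ _. unfold K1. rewrite (rsum_remove n q (fun i => f 1%nat (Lk d i x y))) by auto. ring.
 apply psd_rsum. intros t Ht. destruct (Nat.eqb t q). apply psd_const; lra. apply psd_f1Lk. Qed.

Lemma Hfs_abs i x : (1 <= i <= N)%nat -> infinite_sum (fun t => Rabs (b i t) * x ^ t) (f i x).
Proof. intros H. apply (isum_ext (fun t => a i t * x ^ t)). intros; rewrite Hab; auto. apply Hfs; auto. Qed.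

Lemma Hb_sig1 q (w : nat -> R) : (q < n)%nat ->
  Hb Sp (K1 d n f) (fun X => sigma 1%nat (rsum d (fun m => X q m * w m))).
Proof. intros Hq. apply (Hb_mono Sp (fun X Y => f 1%nat (Lk d q X Y))).
 apply (ps_Hb (b 1%nat) (sigma 1%nat) (f 1%nat) Sp (Lk d q)).
 intros; apply Hsig; lia. intros; apply Hfs_abs; lia. apply psd_Lk. apply Hb_lin.
 apply f1Lk_le_K1; auto. Qed.

Lemma Hb_sigS k h : (1 <= k)%nat -> (S k <= N)%nat -> Hb Sp (Gk d n f k) h ->
  Hb Sp (Gk d n f (S k)) (fun X => sigma (S k) (h X)).
Proof. intros H1 H2 Hh. apply (Hb_ext Sp (fun X Y => f (S k) (Gk d n f k X Y)) _ (fun X => sigma (S k) (h X)) (fun X => sigma (S k) (h X))).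
 intros; rewrite Gk_S; auto. auto.
 apply (ps_Hb (b (S k)) (sigma (S k)) (f (S k)) Sp (Gk d n f k)).
 intros; apply Hsig; lia. intros; apply Hfs_abs; lia. apply psd_Gk; lia. auto. Qed.

Lemma Gk_sym k : (1 <= k <= N)%nat -> forall x y, Sp x -> Sp y -> Gk d n f k x y = Gk d n f k y x.
Proof. intros H. destruct (psd_Gk k H); auto. Qed.

Variables (dd nn pp : nat -> nat) (gam : nat -> nat -> nat -> R) (W : nat -> nat -> nat -> R).
Hypotheses (Hd1 : dd 1%nat = d) (Hp1 : pp 1%nat = 1%nat) (Hn1 : nn 1%nat = n).

Lemma Xs_S X k q m : Xs sigma dd nn pp gam W X (S k) q m =
  rsum (nn (S k)) (fun q' => gam (S k) (q + m / pp (S (S k)))%nat q' *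
     sigma (S k) (rsum (dd (S k) * pp (S k)) (fun m' => Xs sigma dd nn pp gam W X k q' m' * W (S k) (m mod pp (S (S k)))%nat m'))).
Proof. reflexivity. Qed.

Lemma Hb_layers k : (1 <= k <= N)%nat -> forall q m, Hb Sp (Gk d n f k) (fun X => Xs sigma dd nn pp gam W X k q m).
Proof. induction k; intros Hk q m. lia. destruct k.
 - eapply (Hb_ext Sp (K1 d n f)); [intros; unfold Gk; simpl; auto | intros x _; symmetry; apply Xs_S | ].
   apply Hb_rsum. intros; unfold K1; apply psd_K1; auto.
   rewrite Hn1. intros q' Hq'. apply Hb_scal. rewrite Hd1, Hp1, Nat.mul_1_r. simpl.
   apply (Hb_sig1 q' (W 1%nat ((m mod pp 2)%nat))); auto.
 - eapply (Hb_ext Sp (Gk d n f (S (S k)))); [intros; auto | intros x _; symmetry; apply Xs_S | ].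
   apply Hb_rsum. intros; apply Gk_sym; auto.
   intros q' Hq'. apply Hb_scal. apply (Hb_sigS (S k)). lia. lia.
   apply Hb_rsum. intros; apply Gk_sym; auto; lia.
   intros m' Hm'. apply (Hb_ext Sp (Gk d n f (S k)) _ (fun X => W (S (S k)) (m mod pp (S (S (S k))))%nat m' * Xs sigma dd nn pp gam W X (S k) q' m')).
   auto. intros; ring. apply Hb_scal. apply IHk. lia. Qed.

Lemma Hb_cnn WN : (2 <= N)%nat -> Hb Sp (Gk d n f N) (cnn sigma dd nn pp gam W N WN).
Proof. intros H2. unfold cnn. apply Hb_rsum. apply Gk_sym; lia. intros m Hm.
 apply (Hb_ext Sp (Gk d n f N) _ (fun X => WN m * Xs sigma dd nn pp gam W X N 0%nat m)). auto. intros; ring.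
 apply Hb_scal. apply Hb_layers. lia. Qed.

End Main.

Lemma sub_incr (phi : nat -> nat) : (forall p, (phi p < phi (S p))%nat) -> forall p, (p <= phi p)%nat.
Proof. intros H p. induction p. lia. specialize (H p). lia. Qed.

Lemma sub_incr_mono (phi : nat -> nat) : (forall p, (phi p < phi (S p))%nat) -> forall p q, (p < q)%nat -> (phi p < phi q)%nat.
Proof. intros H p q Hpq. induction q. lia. destruct (Nat.eq_dec p q). subst; auto. specialize (H q). specialize (IHq ltac:(lia)). lia. Qed.

Lemma cv_sub a l (phi : nat -> nat) : Un_cv a l -> (forall p, (phi p < phi (S p))%nat) -> Un_cv (fun p => a (phi p)) l.
Proof. intros H Hp e He. destruct (H e He) as [N HN]. exists N. intros p Hpn. apply HN.
 pose proof (sub_incr phi Hp p). lia. Qed.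

Lemma valadh_sub v l : ValAdh v l -> exists psi, (forall p, (psi p < psi (S p))%nat) /\ Un_cv (fun p => v (psi p)) l.
Proof. intros H.
 assert (Hex : forall N k, exists p, (N <= p)%nat /\ Rabs (v p - l) < / (INR k + 1)).
 { intros N k. assert (Hk : 0 < / (INR k + 1)) by (apply Rinv_0_lt_compat; pose proof (pos_INR k); lra).
   destruct (H (disc l (mkposreal _ Hk)) N) as [p [Hp1 Hp2]]. exists (mkposreal _ Hk). intros y Hy; auto.
   exists p; split; auto. }
 set (F := fun N k => proj1_sig (constructive_indefinite_description _ (Hex N k))).
 assert (HF : forall N k, (N <= F N k)%nat /\ Rabs (v (F N k) - l) < / (INR k + 1)).
 { intros; unfold F; destruct (constructive_indefinite_description _ (Hex N k)); auto. }
 set (psi := fix psi p := match p with O => F O O | S p' => F (S (psi p')) (S p') end).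
 exists psi. split.
 - intros p. simpl. destruct (HF (S (psi p)) (S p)). lia.
 - intros e He. destruct (inv_small e He) as [M HM]. exists M. intros p Hp. unfold R_dist.
   eapply Rlt_trans. 2: apply (HM p Hp). destruct p; simpl; apply HF. Qed.

Lemma fin_ev m (Rl : nat -> nat -> Prop) : (forall i, (i < m)%nat -> exists P, forall p, (p >= P)%nat -> Rl i p) ->
  exists P, forall p, (p >= P)%nat -> forall i, (i < m)%nat -> Rl i p.
Proof. induction m; intros H. exists O; intros; lia.
 destruct IHm as [P1 H1]. intros; apply H; lia. destruct (H m ltac:(lia)) as [P2 H2].
 exists (max P1 P2). intros p Hp i Hi. destruct (Nat.eq_dec i m). subst; apply H2; lia. apply H1; lia. Qed.

Section Geo.
Variables (d n : nat).
Let Sp := inI d n.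

Definition close (del : R) (x y : Pt) := forall i k, (i < n)%nat -> (k < d)%nat -> Rabs (x i k - y i k) < del.

Lemma close_sym del x y : close del x y -> close del y x.
Proof. intros H i k Hi Hk. rewrite Rabs_minus_sym; auto. Qed.

Lemma close_tri a b x y z : close a x y -> close b y z -> close (a + b) x z.
Proof. intros H1 H2 i k Hi Hk. replace (x i k - z i k) with ((x i k - y i k) + (y i k - z i k)) by ring.
 eapply Rle_lt_trans. apply Rabs_triang. specialize (H1 i k Hi Hk). specialize (H2 i k Hi Hk). lra. Qed.

Lemma close_mono a b x y : a <= b -> close a x y -> close b x y.
Proof. intros H1 H2 i k Hi Hk. specialize (H2 i k Hi Hk). lra. Qed.

Lemma coord_bound x i k : Sp x -> (i < n)%nat -> (k < d)%nat -> Rabs (x i k) <= 1.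
Proof. intros Hx Hi Hk. specialize (Hx i Hi). assert (x i k ^ 2 <= 1).
 { rewrite <- Hx. apply (rsum_term_le d k (fun k0 => x i k0 ^ 2)). intros; apply pow2_ge_0. auto. }
 apply Rabs_le. nra. Qed.

Lemma dist_close del x y : Defs.dist d n x y < del -> close del x y.
Proof. intros H i k Hi Hk. unfold dist in H.
 set (T := rsum n (fun i0 => rsum d (fun k0 => (x i0 k0 - y i0 k0) ^ 2))) in *.
 assert (Ht : (x i k - y i k) ^ 2 <= T).
 { unfold T. eapply Rle_trans. 2: apply (rsum_term_le n i (fun i0 => rsum d (fun k0 => (x i0 k0 - y i0 k0) ^ 2))).
   apply (rsum_term_le d k (fun k0 => (x i k0 - y i k0) ^ 2)). intros; apply pow2_ge_0. auto.
   intros; apply rsum_nonneg; intros; apply pow2_ge_0. auto. }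
 rewrite <- sqrt_Rsqr_abs. eapply Rle_lt_trans. 2: apply H. apply sqrt_le_1. apply Rle_0_sqr.
 eapply Rle_trans. 2: apply Ht. apply pow2_ge_0. unfold Rsqr. fold T. replace ((x i k - y i k) * (x i k - y i k)) with ((x i k - y i k)^2) by ring. lra. Qed.

Lemma close_dist del x y : 0 < del -> close del x y -> Defs.dist d n x y <= (INR n * INR d + 1) * del.
Proof. intros Hd H. unfold dist.
 assert (HT : rsum n (fun i0 => rsum d (fun k0 => (x i0 k0 - y i0 k0) ^ 2)) <= INR n * (INR d * del ^ 2)).
 { replace (INR n * (INR d * del ^ 2)) with (rsum n (fun _ => rsum d (fun _ => del ^ 2))).
   apply rsum_le; intros i Hi; apply rsum_le; intros k Hk. specialize (H i k Hi Hk).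
   assert ((x i k - y i k)^2 = Rabs (x i k - y i k) ^ 2) by (unfold Rabs; destruct (Rcase_abs (x i k - y i k)); ring).
   rewrite H0. pose proof (Rabs_pos (x i k - y i k)). nra.
   assert (forall m r, rsum m (fun _ => r) = INR m * r). { induction m; intros; simpl; [lra|]. rewrite IHm. destruct m; simpl; lra. }
   rewrite !H0. auto. }
 assert (0 <= INR n * INR d) by (apply Rmult_le_pos; apply pos_INR).
 rewrite <- (sqrt_pow2 ((INR n * INR d + 1) * del)) by nra.
 apply sqrt_le_1. apply rsum_nonneg; intros; apply rsum_nonneg; intros; apply pow2_ge_0. nra.
 eapply Rle_trans. apply HT. nra. Qed.

Lemma seqcpt (u : nat -> Pt) : (forall p, Sp (u p)) ->
  exists phi : nat -> nat, (forall p, (phi p < phi (S p))%nat) /\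
    exists x, Sp x /\ forall del, del > 0 -> exists P, forall p, (p >= P)%nat -> close del (u (phi p)) x.
Proof. intros Hu.
 assert (Hlist : forall Lc : list (nat * nat), (forall ik, In ik Lc -> (fst ik < n)%nat /\ (snd ik < d)%nat) ->
   exists phi : nat -> nat, (forall p, (phi p < phi (S p))%nat) /\
     forall ik, In ik Lc -> exists l, Un_cv (fun p => u (phi p) (fst ik) (snd ik)) l).
 { induction Lc as [|[i k] Lc IH]; intros HL.
   - exists (fun p => p). split. intros; lia. intros ik [].
   - destruct IH as [phi [Hphi Hc]]. intros; apply HL; right; auto.
     destruct (HL (i, k) (or_introl eq_refl)) as [Hi Hk]. simpl in Hi, Hk.
     destruct (Bolzano_Weierstrass (fun p => u (phi p) i k) (fun c => -1 <= c <= 1) (compact_P3 (-1) 1)) as [l Hl].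
     intros p. simpl. pose proof (coord_bound (u (phi p)) i k (Hu _) Hi Hk) as Hb0. apply Rabs_def2b in Hb0. lra.
     destruct (valadh_sub _ _ Hl) as [psi [Hpsi Hcv]].
     exists (fun p => phi (psi p)). split.
     + intros p. apply sub_incr_mono; auto.
     + intros ik [<-|Hin]. exists l; simpl; auto. destruct (Hc ik Hin) as [l' Hl']. exists l'.
       apply (cv_sub (fun p => u (phi p) (fst ik) (snd ik)) l' psi); auto. }
 destruct (Hlist (list_prod (seq 0 n) (seq 0 d))) as [phi [Hphi Hc]].
 { intros [i k] Hin. apply in_prod_iff in Hin. destruct Hin as [H1 H2]. apply in_seq in H1; apply in_seq in H2. simpl; lia. }
 assert (Hc2 : forall i k, exists l, (i < n)%nat -> (k < d)%nat -> Un_cv (fun p => u (phi p) i k) l).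
 { intros i k. destruct (classic ((i < n)%nat /\ (k < d)%nat)) as [[Hi Hk]|Hn].
   destruct (Hc (i, k)) as [l Hl]. apply in_prod_iff; split; apply in_seq; lia. exists l; auto.
   exists 0. intros; exfalso; auto. }
 set (x := fun i k => proj1_sig (constructive_indefinite_description _ (Hc2 i k))).
 assert (Hx : forall i k, (i < n)%nat -> (k < d)%nat -> Un_cv (fun p => u (phi p) i k) (x i k)).
 { intros i k Hi Hk. unfold x. destruct (constructive_indefinite_description _ (Hc2 i k)) as [l Hl]; simpl; auto. }
 exists phi. split; auto. exists x. split.
 - intros i Hi. apply (UL_sequence (fun p => rsum d (fun k => u (phi p) i k ^ 2))).
   apply (rsum_cv d (fun p k => u (phi p) i k ^ 2)). intros k Hk.
   apply (Un_cv_ext (fun p => u (phi p) i k * u (phi p) i k)). intros; ring.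
   replace (x i k ^ 2) with (x i k * x i k) by ring. apply CV_mult; apply Hx; auto.
   apply (Un_cv_ext (fun _ => 1)). intros p. symmetry. apply (Hu (phi p)). auto. apply cv_const.
 - intros del Hdel. destruct (fin_ev n (fun i p => forall k, (k < d)%nat -> Rabs (u (phi p) i k - x i k) < del)) as [P HP].
   { intros i Hi. apply (fin_ev d (fun k p => Rabs (u (phi p) i k - x i k) < del)). intros k Hk.
     destruct (Hx i k Hi Hk del Hdel) as [P HP]. exists P. intros p Hp. apply HP; auto. }
   exists P. intros p Hp i k Hi Hk. apply HP; auto.
Qed.
Lemma lebesgue (P : Pt -> Pt -> Prop) :
  (forall y, Sp y -> exists del, del > 0 /\ forall z, Sp z -> close del y z -> P y z) ->
  exists del, del > 0 /\ forall z, Sp z -> exists y, Sp y /\ forall w, Sp w -> close del z w -> P y w.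
Proof. intros HP. destruct (classic (exists del, del > 0 /\ forall z, Sp z -> exists y, Sp y /\ forall w, Sp w -> close del z w -> P y w)) as [|Hn]; auto.
 exfalso.
 assert (Hb : forall p : nat, exists z, Sp z /\ forall y, Sp y -> exists w, Sp w /\ close (/ (INR p + 1)) z w /\ ~ P y w).
 { intros p. apply NNPP. intros Hc. apply Hn. exists (/ (INR p + 1)). split.
   apply Rinv_0_lt_compat; pose proof (pos_INR p); lra.
   intros z Hz. apply NNPP. intros Hc2. apply Hc. exists z. split; auto. intros y Hy. apply NNPP. intros Hc3.
   apply Hc2. exists y. split; auto. intros w Hw Hcl. apply NNPP. intros Hc4. apply Hc3. exists w. auto. }
 set (u := fun p => proj1_sig (constructive_indefinite_description _ (Hb p))).
 assert (Hu : forall p, Sp (u p) /\ forall y, Sp y -> exists w, Sp w /\ close (/ (INR p + 1)) (u p) w /\ ~ P y w).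
 { intros p; unfold u; destruct (constructive_indefinite_description _ (Hb p)); auto. }
 destruct (seqcpt u (fun p => proj1 (Hu p))) as [phi [Hphi [x [Hx Hcv]]]].
 destruct (HP x Hx) as [dx [Hdx Hdx2]].
 destruct (Hcv (dx / 2)) as [P1 HP1]. lra.
 assert (Hd2 : 0 < dx / 2) by lra. destruct (inv_small _ Hd2) as [M HM].
 set (p := max P1 M).
 destruct (proj2 (Hu (phi p)) x Hx) as [w [Hw [Hcl Hnp]]].
 apply Hnp. apply Hdx2; auto.
 assert (Hle : / (INR (phi p) + 1) <= dx / 2).
 { apply Rlt_le. eapply Rle_lt_trans. 2: apply (HM p); lia. apply Rinv_le_contravar. pose proof (pos_INR p); lra.
   pose proof (sub_incr phi Hphi p). apply Rplus_le_compat_r, le_INR; auto. }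
 replace dx with (dx / 2 + dx / 2) by field. apply (close_tri _ _ x (u (phi p)) w).
 apply close_sym. apply HP1. lia. eapply close_mono. apply Hle. auto. Qed.

Lemma nets del : del > 0 -> exists L : list Pt, (forall q, In q L -> Sp q) /\ forall z, Sp z -> exists q, In q L /\ close del q z.
Proof. intros Hdel. destruct (classic (exists L : list Pt, (forall q, In q L -> Sp q) /\ forall z, Sp z -> exists q, In q L /\ close del q z)) as [|Hn]; auto.
 exfalso.
 assert (HF : forall L : list Pt, exists z, (forall q, In q L -> Sp q) -> Sp z /\ forall q, In q L -> ~ close del q z).
 { intros L. destruct (classic (forall q, In q L -> Sp q)) as [HL|HL].
   - apply NNPP. intros Hc. apply Hn. exists L. split; auto. intros z Hz. apply NNPP. intros Hc2. apply Hc. exists z.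
     intros _. split; auto. intros q Hq Hcl. apply Hc2. exists q; auto.
   - exists (fun _ _ => 0). intros H; exfalso; auto. }
 set (F := fun L => proj1_sig (constructive_indefinite_description _ (HF L))).
 assert (HFp : forall L, (forall q, In q L -> Sp q) -> Sp (F L) /\ forall q, In q L -> ~ close del q (F L)).
 { intros L; unfold F; destruct (constructive_indefinite_description _ (HF L)); auto. }
 set (Ls := fix Ls p := match p with O => nil | S p' => Ls p' ++ (F (Ls p') :: nil) end).
 set (u := fun p => F (Ls p)).
 assert (HLs : forall p, (forall q, In q (Ls p) -> Sp q) /\ forall p', (p' < p)%nat -> In (u p') (Ls p)).
 { induction p. split. intros q []. intros; lia.
   destruct IHp as [H1 H2]. simpl. split.
   - intros q Hq. apply in_app_or in Hq. destruct Hq as [Hq|[<-|[]]]; auto. apply HFp; auto.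
   - intros p' Hp'. apply in_or_app. destruct (Nat.eq_dec p' p). subst. right; left; auto. left; apply H2; lia. }
 assert (Hu : forall p, Sp (u p)) by (intros p; apply HFp; apply HLs).
 assert (Hsep : forall p p', (p' < p)%nat -> ~ close del (u p') (u p)).
 { intros p p' Hp. apply (HFp (Ls p)). apply HLs. apply HLs; auto. }
 destruct (seqcpt u Hu) as [phi [Hphi [x [Hx Hcv]]]].
 destruct (Hcv (del / 2)) as [P HP]. lra.
 apply (Hsep (phi (S P)) (phi P)). apply Hphi.
 replace del with (del / 2 + del / 2) by field. apply (close_tri _ _ _ x). apply HP; lia. apply close_sym; apply HP; lia. Qed.

Lemma cover (P : Pt -> Pt -> Prop) :
  (forall y, Sp y -> exists del, del > 0 /\ forall z, Sp z -> close del y z -> P y z) ->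
  exists L : list Pt, (forall y, In y L -> Sp y) /\ forall z, Sp z -> exists y, In y L /\ P y z.
Proof. intros HP. destruct (lebesgue P HP) as [del [Hdel Hleb]].
 destruct (nets del Hdel) as [L' [HL'1 HL'2]].
 assert (HY : forall z, exists y, Sp z -> Sp y /\ forall w, Sp w -> close del z w -> P y w).
 { intros z. destruct (classic (Sp z)) as [Hz|Hz]. destruct (Hleb z Hz) as [y Hy]. exists y; auto.
   exists z. intros; exfalso; auto. }
 set (Y := fun z => proj1_sig (constructive_indefinite_description _ (HY z))).
 assert (HYp : forall z, Sp z -> Sp (Y z) /\ forall w, Sp w -> close del z w -> P (Y z) w).
 { intros z; unfold Y; destruct (constructive_indefinite_description _ (HY z)); auto. }
 exists (map Y L'). split.
 - intros y Hy. apply in_map_iff in Hy. destruct Hy as [q [<- Hq]]. apply HYp; auto.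
 - intros z Hz. destruct (HL'2 z Hz) as [q [Hq Hcl]]. exists (Y q). split. apply in_map; auto.
   apply HYp; auto. Qed.

End Geo.

Inductive pexp := PC (r : R) | PX (i k : nat) | PAdd (p q : pexp) | PMul (p q : pexp).
Fixpoint peval (e : pexp) (X : Pt) : R :=
  match e with PC r => r | PX i k => X i k | PAdd p q => peval p X + peval q X | PMul p q => peval p X * peval q X end.
Fixpoint wf (n d : nat) (e : pexp) : Prop :=
  match e with PC _ => True | PX i k => (i < n)%nat /\ (k < d)%nat | PAdd p q => wf n d p /\ wf n d q | PMul p q => wf n d p /\ wf n d q end.

Fixpoint pk (k : nat) (t : R) : R := match k with O => 0 | S k' => pk k' t + (t ^ 2 - (pk k' t) ^ 2) / 2 end.
Fixpoint pke (k : nat) (e : pexp) : pexp := match k with O => PC 0 | S k' =>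
  PAdd (pke k' e) (PMul (PC (/2)) (PAdd (PMul e e) (PMul (PC (-1)) (PMul (pke k' e) (pke k' e))))) end.

Lemma pke_eval k e X : peval (pke k e) X = pk k (peval e X).
Proof. induction k; simpl; auto. rewrite IHk. field. Qed.

Lemma pke_wf n d k e : wf n d e -> wf n d (pke k e).
Proof. intros H; induction k; simpl; auto. repeat split; auto. Qed.

Lemma div_le a b c e : 0 < b -> 0 < e -> a * e <= c * b -> a / b <= c / e.
Proof. intros Hb He H. replace (a / b) with ((a * e) * / (b * e)) by (field; lra).
 replace (c / e) with ((c * b) * / (b * e)) by (field; lra). apply Rmult_le_compat_r; auto.
 apply Rlt_le, Rinv_0_lt_compat; nra. Qed.

Lemma pk_approx k t : Rabs t <= 1 -> 0 <= pk k t <= Rabs t /\ Rabs t - pk k t <= 2 / (INR k + 2).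
Proof. intros Ht. set (a := Rabs t). assert (Ha : 0 <= a) by apply Rabs_pos.
 assert (Hta : t ^ 2 = a ^ 2) by (unfold a, Rabs; destruct (Rcase_abs t); ring).
 induction k.
 - simpl. split. lra. replace (0 + 2) with 2 by lra. unfold a; lra.
 - destruct IHk as [[H1 H2] H3]. change (pk (S k) t) with (pk k t + (t ^ 2 - (pk k t) ^ 2) / 2). rewrite Hta. set (p := pk k t) in *.
   set (K := INR k) in *. assert (HK : 0 <= K) by apply pos_INR.
   rewrite S_INR. fold K. set (e := a - p) in *.
   assert (Hp' : a - (p + (a ^ 2 - p ^ 2) / 2) = e * (1 - (a + p) / 2)) by (unfold e; field).
   assert (Hu1 : 2 / (K + 2) <= 1) by (apply (Rmult_le_reg_r (K+2)); [lra|]; unfold Rdiv; rewrite Rmult_assoc, Rinv_l by lra; lra).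
   split. split.
   + assert (0 <= (a ^ 2 - p ^ 2) / 2) by (unfold Rdiv; apply Rmult_le_pos; [nra|lra]). lra.
   + assert (0 <= e * (1 - (a + p) / 2)) by (apply Rmult_le_pos; unfold e; unfold a in *; lra). lra.
   + rewrite Hp'. set (u := 2 / (K + 2)) in *.
     assert (e * (1 - (a + p) / 2) <= e * (1 - e / 2)) by (apply Rmult_le_compat_l; unfold e in *; lra).
     assert (e * (1 - e / 2) <= u * (1 - u / 2)).
     { assert (0 <= (u - e) * (1 - (u + e) / 2)) by (apply Rmult_le_pos; unfold e in *; unfold a in *; lra). nra. }
     assert (u * (1 - u / 2) = 2 * (K + 1) / ((K + 2) * (K + 2))) by (unfold u; field; lra).
     assert (2 * (K + 1) / ((K + 2) * (K + 2)) <= 2 / (K + 1 + 2)) by (apply div_le; nra).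
     lra.
Qed.

Section SW.
Variables (d n : nat).
Let Sp := inI d n.

Definition cont_on (g : Pt -> R) := forall x, Sp x -> forall eps, eps > 0 ->
  exists del, del > 0 /\ forall y, Sp y -> close d n del x y -> Rabs (g y - g x) < eps.

Definition App (g : Pt -> R) := forall eps, eps > 0 -> exists e, wf n d e /\ forall x, Sp x -> Rabs (peval e x - g x) < eps.

Lemma pe_lip e : wf n d e -> exists B L, 0 <= B /\ 0 <= L /\ (forall x, Sp x -> Rabs (peval e x) <= B) /\
   forall x y del, Sp x -> Sp y -> close d n del x y -> Rabs (peval e x - peval e y) <= L * del.
Proof. induction e; simpl; intros Hw.
 - exists (Rabs r), 0. split; [apply Rabs_pos|]. split; [lra|]. split; [intros; lra|]. intros; rewrite Rminus_diag, Rabs_R0; lra.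
 - exists 1, 1. split; [lra|]. split; [lra|]. split. intros; apply (coord_bound d n); tauto.
   intros x y del Hx Hy Hc. specialize (Hc i k (proj1 Hw) (proj2 Hw)). lra.
 - destruct Hw as [Hw1 Hw2]. destruct (IHe1 Hw1) as [B1 [L1 [HB1 [HL1 [Hb1 Hl1]]]]].
   destruct (IHe2 Hw2) as [B2 [L2 [HB2 [HL2 [Hb2 Hl2]]]]].
   exists (B1 + B2), (L1 + L2). repeat split; try lra.
   intros x Hx. eapply Rle_trans. apply Rabs_triang. specialize (Hb1 x Hx); specialize (Hb2 x Hx); lra.
   intros x y del Hx Hy Hc. replace (peval e1 x + peval e2 x - (peval e1 y + peval e2 y)) with
     ((peval e1 x - peval e1 y) + (peval e2 x - peval e2 y)) by ring.
   eapply Rle_trans. apply Rabs_triang. specialize (Hl1 x y del Hx Hy Hc). specialize (Hl2 x y del Hx Hy Hc). lra.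
 - destruct Hw as [Hw1 Hw2]. destruct (IHe1 Hw1) as [B1 [L1 [HB1 [HL1 [Hb1 Hl1]]]]].
   destruct (IHe2 Hw2) as [B2 [L2 [HB2 [HL2 [Hb2 Hl2]]]]].
   exists (B1 * B2), (B1 * L2 + B2 * L1). repeat split. apply Rmult_le_pos; auto. nra.
   intros x Hx. rewrite Rabs_mult. apply Rmult_le_compat; auto; apply Rabs_pos.
   intros x y del Hx Hy Hc.
   replace (peval e1 x * peval e2 x - peval e1 y * peval e2 y) with
     (peval e1 x * (peval e2 x - peval e2 y) + peval e2 y * (peval e1 x - peval e1 y)) by ring.
   eapply Rle_trans. apply Rabs_triang. rewrite !Rabs_mult.
   specialize (Hl1 x y del Hx Hy Hc). specialize (Hl2 x y del Hx Hy Hc).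
   specialize (Hb1 x Hx). specialize (Hb2 y Hy).
   assert (Rabs (peval e1 x) * Rabs (peval e2 x - peval e2 y) <= B1 * (L2 * del)) by (apply Rmult_le_compat; auto; apply Rabs_pos).
   assert (Rabs (peval e2 y) * Rabs (peval e1 x - peval e1 y) <= B2 * (L1 * del)) by (apply Rmult_le_compat; auto; apply Rabs_pos).
   nra.
Qed.

Lemma cont_pe e : wf n d e -> cont_on (peval e).
Proof. intros Hw x Hx eps Heps. destruct (pe_lip e Hw) as [B [L [_ [HL [_ Hl]]]]].
 exists (eps / (L + 1)). split. apply Rdiv_lt_0_compat; lra.
 intros y Hy Hc. rewrite Rabs_minus_sym. eapply Rle_lt_trans. apply (Hl x y _ Hx Hy Hc).
 apply (Rmult_lt_reg_l (L + 1)). lra. replace ((L + 1) * (L * (eps / (L + 1)))) with (L * eps) by (field; lra). nra. Qed.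

Lemma cont_ext g h : (forall x, Sp x -> g x = h x) -> cont_on g -> cont_on h.
Proof. intros E H x Hx eps Heps. destruct (H x Hx eps Heps) as [del [Hd Hd2]]. exists del; split; auto.
 intros y Hy Hc. rewrite <- !E by auto. auto. Qed.

Lemma cont_add g h : cont_on g -> cont_on h -> cont_on (fun x => g x + h x).
Proof. intros H1 H2 x Hx eps Heps. destruct (H1 x Hx (eps/2)) as [d1 [Hd1 H1']]. lra.
 destruct (H2 x Hx (eps/2)) as [d2 [Hd2 H2']]. lra. exists (Rmin d1 d2). split. apply Rmin_pos; auto.
 intros y Hy Hc. replace (g y + h y - (g x + h x)) with ((g y - g x) + (h y - h x)) by ring.
 eapply Rle_lt_trans. apply Rabs_triang.
 assert (Rabs (g y - g x) < eps/2) by (apply H1'; auto; eapply close_mono; [apply Rmin_l|]; eauto).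
 assert (Rabs (h y - h x) < eps/2) by (apply H2'; auto; eapply close_mono; [apply Rmin_r|]; eauto). lra. Qed.

Lemma cont_scal r g : cont_on g -> cont_on (fun x => r * g x).
Proof. intros H x Hx eps Heps. destruct (H x Hx (eps / (Rabs r + 1))) as [del [Hd H']].
 apply Rdiv_lt_0_compat; [lra| pose proof (Rabs_pos r); lra].
 exists del. split; auto. intros y Hy Hc. replace (r * g y - r * g x) with (r * (g y - g x)) by ring.
 rewrite Rabs_mult. specialize (H' y Hy Hc). pose proof (Rabs_pos r).
 apply Rle_lt_trans with (Rabs r * (eps / (Rabs r + 1))). apply Rmult_le_compat_l; auto; lra.
 apply (Rmult_lt_reg_l (Rabs r + 1)). lra. replace ((Rabs r + 1) * (Rabs r * (eps / (Rabs r + 1)))) with (Rabs r * eps) by (field; lra). nra. Qed.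

Lemma cont_abs g : cont_on g -> cont_on (fun x => Rabs (g x)).
Proof. intros H x Hx eps Heps. destruct (H x Hx eps Heps) as [del [Hd H']]. exists del; split; auto.
 intros y Hy Hc. eapply Rle_lt_trans. apply Rabs_triang_inv2. auto. Qed.

Lemma Rmax_expr a c : Rmax a c = (a + c + Rabs (a - c)) / 2.
Proof. unfold Rmax, Rabs. destruct (Rle_dec a c); destruct (Rcase_abs (a - c)); lra. Qed.
Lemma Rmin_expr a c : Rmin a c = (a + c - Rabs (a - c)) / 2.
Proof. unfold Rmin, Rabs. destruct (Rle_dec a c); destruct (Rcase_abs (a - c)); lra. Qed.

Lemma cont_max g h : cont_on g -> cont_on h -> cont_on (fun x => Rmax (g x) (h x)).
Proof. intros H1 H2. apply (cont_ext (fun x => / 2 * ((g x + h x) + Rabs (g x + (-1) * h x)))).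
 intros; rewrite Rmax_expr; replace (g x + -1 * h x) with (g x - h x) by ring; field.
 apply cont_scal. apply cont_add. apply cont_add; auto. apply cont_abs. apply cont_add; auto. apply cont_scal; auto. Qed.

Lemma cont_min g h : cont_on g -> cont_on h -> cont_on (fun x => Rmin (g x) (h x)).
Proof. intros H1 H2. apply (cont_ext (fun x => / 2 * ((g x + h x) + (-1) * Rabs (g x + (-1) * h x)))).
 intros; rewrite Rmin_expr; replace (g x + -1 * h x) with (g x - h x) by ring; field.
 apply cont_scal. apply cont_add. apply cont_add; auto. apply cont_scal. apply cont_abs. apply cont_add; auto. apply cont_scal; auto. Qed.

Lemma App_ext g h : (forall x, Sp x -> g x = h x) -> App g -> App h.
Proof. intros E H eps Heps. destruct (H eps Heps) as [e [He H']]. exists e; split; auto. intros; rewrite <- E; auto. Qed.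

Lemma App_pe e : wf n d e -> App (peval e).
Proof. intros Hw eps Heps. exists e; split; auto. intros; rewrite Rminus_diag, Rabs_R0; lra. Qed.

Lemma App_add g h : App g -> App h -> App (fun x => g x + h x).
Proof. intros H1 H2 eps Heps. destruct (H1 (eps/2)) as [e1 [Hw1 He1]]. lra. destruct (H2 (eps/2)) as [e2 [Hw2 He2]]. lra.
 exists (PAdd e1 e2). split. simpl; auto. intros x Hx. simpl.
 replace (peval e1 x + peval e2 x - (g x + h x)) with ((peval e1 x - g x) + (peval e2 x - h x)) by ring.
 eapply Rle_lt_trans. apply Rabs_triang. specialize (He1 x Hx). specialize (He2 x Hx). lra. Qed.

Lemma App_scal r g : App g -> App (fun x => r * g x).
Proof. intros H eps Heps. destruct (H (eps / (Rabs r + 1))) as [e [Hw He]].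
 apply Rdiv_lt_0_compat; [lra| pose proof (Rabs_pos r); lra].
 exists (PMul (PC r) e). split. simpl; auto. intros x Hx. simpl. replace (r * peval e x - r * g x) with (r * (peval e x - g x)) by ring.
 rewrite Rabs_mult. specialize (He x Hx). pose proof (Rabs_pos r).
 apply Rle_lt_trans with (Rabs r * (eps / (Rabs r + 1))). apply Rmult_le_compat_l; auto; lra.
 apply (Rmult_lt_reg_l (Rabs r + 1)). lra. replace ((Rabs r + 1) * (Rabs r * (eps / (Rabs r + 1)))) with (Rabs r * eps) by (field; lra). nra. Qed.

Lemma App_abs g : App g -> App (fun x => Rabs (g x)).
Proof. intros H eps Heps. destruct (H (eps/2)) as [e [Hw He]]. lra.
 destruct (pe_lip e Hw) as [B [L [HB [_ [Hb _]]]]].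
 set (M := B + 1).
 assert (HM : 0 < M) by (unfold M; lra).
 assert (Hk : 0 < eps / 2 / (2 * M)) by (apply Rdiv_lt_0_compat; lra).
 destruct (inv_small _ Hk) as [k Hkk].
 exists (PMul (PC M) (pke k (PMul (PC (/ M)) e))). split. simpl. split; auto. apply pke_wf. simpl; auto.
 intros x Hx. simpl. rewrite pke_eval. simpl.
 assert (Ht : Rabs (/ M * peval e x) <= 1).
 { rewrite Rabs_mult, Rabs_inv, (Rabs_right M) by lra. specialize (Hb x Hx).
   apply (Rmult_le_reg_l M). lra. rewrite <- Rmult_assoc, Rinv_r by lra. unfold M in *; lra. }
 destruct (pk_approx k _ Ht) as [_ Hap].
 assert (Hk1 : 2 / (INR k + 2) <= 2 * / (INR k + 1)).
 { apply (div_le 2 (INR k + 2) 2 (INR k + 1)). pose proof (pos_INR k); lra. pose proof (pos_INR k); lra. pose proof (pos_INR k); lra. }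
 specialize (Hkk k (le_n _)).
 assert (E : Rabs (/ M * peval e x) * M = Rabs (peval e x)).
 { rewrite Rabs_mult, Rabs_inv, (Rabs_right M) by lra. field. lra. }
 assert (H1 : Rabs (M * pk k (/ M * peval e x) - Rabs (peval e x)) <= M * (2 / (INR k + 2))).
 { rewrite <- E. replace (M * pk k (/ M * peval e x) - Rabs (/ M * peval e x) * M) with (- (M * (Rabs (/ M * peval e x) - pk k (/ M * peval e x)))) by ring.
   rewrite Rabs_Ropp, Rabs_mult, (Rabs_right M) by lra. apply Rmult_le_compat_l. lra.
   destruct (pk_approx k _ Ht) as [[H0 H0b] Hq]. rewrite Rabs_right; lra. }
 assert (H2 : M * (2 / (INR k + 2)) < eps / 2).
 { apply Rle_lt_trans with (M * (2 * / (INR k + 1))). apply Rmult_le_compat_l; lra.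
   apply (Rmult_lt_compat_l (2 * M)) in Hkk. 2: lra. replace (2 * M * (eps / 2 / (2 * M))) with (eps / 2) in Hkk by (field; lra). lra. }
 assert (H3 : Rabs (Rabs (peval e x) - Rabs (g x)) < eps / 2).
 { eapply Rle_lt_trans. apply Rabs_triang_inv2. apply He; auto. }
 replace (M * pk k (/ M * peval e x) - Rabs (g x)) with ((M * pk k (/ M * peval e x) - Rabs (peval e x)) + (Rabs (peval e x) - Rabs (g x))) by ring.
 eapply Rle_lt_trans. apply Rabs_triang. lra. Qed.

Lemma App_max g h : App g -> App h -> App (fun x => Rmax (g x) (h x)).
Proof. intros H1 H2. apply (App_ext (fun x => / 2 * ((g x + h x) + Rabs (g x + (-1) * h x)))).
 intros; rewrite Rmax_expr; replace (g x + -1 * h x) with (g x - h x) by ring; field.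
 apply App_scal. apply App_add. apply App_add; auto. apply App_abs. apply App_add; auto. apply App_scal; auto. Qed.

Lemma App_min g h : App g -> App h -> App (fun x => Rmin (g x) (h x)).
Proof. intros H1 H2. apply (App_ext (fun x => / 2 * ((g x + h x) + (-1) * Rabs (g x + (-1) * h x)))).
 intros; rewrite Rmin_expr; replace (g x + -1 * h x) with (g x - h x) by ring; field.
 apply App_scal. apply App_add. apply App_add; auto. apply App_scal. apply App_abs. apply App_add; auto. apply App_scal; auto. Qed.

Lemma interp g x y : cont_on g -> Sp x -> Sp y -> exists e, wf n d e /\ peval e x = g x /\ peval e y = g y.
Proof. intros Hg Hx Hy.
 destruct (classic (exists i k, (i < n)%nat /\ (k < d)%nat /\ x i k <> y i k)) as [[i [k [Hi [Hk Hne]]]]|Hn].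
 - exists (PAdd (PC (g x)) (PMul (PC ((g y - g x) / (y i k - x i k))) (PAdd (PX i k) (PC (- x i k))))).
   simpl. split. tauto. split. ring. field. intros Hc; apply Hne; lra.
 - assert (E : g x = g y).
   { destruct (Req_dec (g x) (g y)) as [|Hne]; auto. exfalso.
     assert (Hp : Rabs (g y - g x) > 0) by (apply Rabs_pos_lt; lra).
     destruct (Hg x Hx _ Hp) as [del [Hd Hd2]].
     assert (close d n del x y).
     { intros i k Hi Hk. destruct (Req_dec (x i k) (y i k)) as [E|E]. rewrite E, Rminus_diag, Rabs_R0; lra.
       exfalso; apply Hn; exists i, k; auto. }
     specialize (Hd2 y Hy H). lra. }
   exists (PC (g x)). simpl. auto.
Qed.

Fixpoint lmax (L : list Pt) (F : Pt -> Pt -> R) (b : Pt -> R) (z : Pt) : R :=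
  match L with nil => b z | y :: L' => Rmax (F y z) (lmax L' F b z) end.
Fixpoint lmin (L : list Pt) (F : Pt -> Pt -> R) (b : Pt -> R) (z : Pt) : R :=
  match L with nil => b z | y :: L' => Rmin (F y z) (lmin L' F b z) end.

Lemma lmax_ge L F b z y : In y L -> F y z <= lmax L F b z.
Proof. induction L; simpl. intros []. intros [<-|H]. apply Rmax_l. eapply Rle_trans. apply IHL; auto. apply Rmax_r. Qed.

Lemma lmax_all L F b z v : (forall y, In y L -> F y z = v) -> b z = v -> lmax L F b z = v.
Proof. induction L; simpl; intros H Hb; auto. rewrite IHL; auto. rewrite H; auto. unfold Rmax; destruct (Rle_dec v v); auto. Qed.

Lemma lmin_le L F b z y : In y L -> lmin L F b z <= F y z.
Proof. induction L; simpl. intros []. intros [<-|H]. apply Rmin_l. eapply Rle_trans. apply Rmin_r. apply IHL; auto. Qed.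

Lemma lmin_gt L F b z v : (forall y, In y L -> v < F y z) -> v < b z -> v < lmin L F b z.
Proof. induction L; simpl; intros H Hb; auto. apply Rmin_glb_lt. apply H; auto. apply IHL; auto. Qed.

Lemma App_lmax L F b : (forall y, In y L -> App (F y)) -> App b -> App (lmax L F b).
Proof. induction L; simpl; intros H Hb; auto. apply (App_max (F a) (lmax L F b)). apply H; auto. apply IHL; auto. Qed.

Lemma App_lmin L F b : (forall y, In y L -> App (F y)) -> App b -> App (lmin L F b).
Proof. induction L; simpl; intros H Hb; auto. apply (App_min (F a) (lmin L F b)). apply H; auto. apply IHL; auto. Qed.

Lemma cont_lmax L F b : (forall y, In y L -> cont_on (F y)) -> cont_on b -> cont_on (lmax L F b).
Proof. induction L; simpl; intros H Hb; auto. apply (cont_max (F a) (lmax L F b)). apply H; auto. apply IHL; auto. Qed.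

Lemma step1 g eps x : cont_on g -> eps > 0 -> Sp x ->
  exists F, App F /\ cont_on F /\ F x = g x /\ forall z, Sp z -> g z - eps < F z.
Proof. intros Hg Heps Hx.
 assert (HE : forall y, exists e, Sp y -> wf n d e /\ peval e x = g x /\ peval e y = g y).
 { intros y. destruct (classic (Sp y)) as [Hy|Hy]. destruct (interp g x y Hg Hx Hy) as [e He]. exists e; auto.
   exists (PC 0). intros; exfalso; auto. }
 set (Ef := fun y => proj1_sig (constructive_indefinite_description _ (HE y))).
 assert (HEf : forall y, Sp y -> wf n d (Ef y) /\ peval (Ef y) x = g x /\ peval (Ef y) y = g y).
 { intros y; unfold Ef; destruct (constructive_indefinite_description _ (HE y)); auto. }
 destruct (cover d n (fun y z => g z - eps < peval (Ef y) z)) as [L [HL1 HL2]].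
 { intros y Hy. destruct (HEf y Hy) as [Hw [_ Hyy]].
   destruct (cont_pe _ Hw y Hy (eps/2)) as [d1 [Hd1 H1]]. lra.
   destruct (Hg y Hy (eps/2)) as [d2 [Hd2 H2]]. lra.
   exists (Rmin d1 d2). split. apply Rmin_pos; auto. intros z Hz Hc.
   assert (A1 : Rabs (peval (Ef y) z - peval (Ef y) y) < eps / 2) by (apply H1; auto; eapply close_mono; [apply Rmin_l|]; eauto).
   assert (A2 : Rabs (g z - g y) < eps / 2) by (apply H2; auto; eapply close_mono; [apply Rmin_r|]; eauto).
   apply Rabs_def2 in A1. apply Rabs_def2 in A2. lra. }
 exists (lmax L (fun y => peval (Ef y)) (peval (Ef x))). split; [|split; [|split]].
 - apply App_lmax. intros y Hy. apply App_pe. apply (proj1 (HEf y (HL1 y Hy))). apply App_pe. apply (proj1 (HEf x Hx)).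
 - apply cont_lmax. intros y Hy. apply cont_pe. apply (proj1 (HEf y (HL1 y Hy))). apply cont_pe. apply (proj1 (HEf x Hx)).
 - apply lmax_all. intros y Hy. apply (proj1 (proj2 (HEf y (HL1 y Hy)))). apply (proj1 (proj2 (HEf x Hx))).
 - intros z Hz. destruct (HL2 z Hz) as [y [Hy Hyz]]. eapply Rlt_le_trans. apply Hyz.
   apply (lmax_ge L (fun y => peval (Ef y))); auto. Qed.

Theorem stone_weierstrass g : cont_on g -> App g.
Proof. intros Hg eps Heps.
 destruct (classic (exists x0, Sp x0)) as [[x0 Hx0]|Hn].
 2: { exists (PC 0). split. simpl; auto. intros x Hx; exfalso; apply Hn; exists x; auto. }
 assert (HS : forall x, exists F, Sp x -> App F /\ cont_on F /\ F x = g x /\ forall z, Sp z -> g z - eps / 2 < F z).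
 { intros x. destruct (classic (Sp x)) as [Hx|Hx]. destruct (step1 g (eps/2) x Hg ltac:(lra) Hx) as [F HF]. exists F; auto.
   exists (fun _ => 0). intros; exfalso; auto. }
 set (Ff := fun x => proj1_sig (constructive_indefinite_description _ (HS x))).
 assert (HFf : forall x, Sp x -> App (Ff x) /\ cont_on (Ff x) /\ Ff x x = g x /\ forall z, Sp z -> g z - eps / 2 < Ff x z).
 { intros x; unfold Ff; destruct (constructive_indefinite_description _ (HS x)); auto. }
 destruct (cover d n (fun x z => Ff x z < g z + eps / 2)) as [L [HL1 HL2]].
 { intros x Hx. destruct (HFf x Hx) as [_ [Hc [Hxx _]]].
   destruct (Hc x Hx (eps/4)) as [d1 [Hd1 H1]]. lra.
   destruct (Hg x Hx (eps/4)) as [d2 [Hd2 H2]]. lra.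
   exists (Rmin d1 d2). split. apply Rmin_pos; auto. intros z Hz Hcl.
   assert (A1 : Rabs (Ff x z - Ff x x) < eps / 4) by (apply H1; auto; eapply close_mono; [apply Rmin_l|]; eauto).
   assert (A2 : Rabs (g z - g x) < eps / 4) by (apply H2; auto; eapply close_mono; [apply Rmin_r|]; eauto).
   apply Rabs_def2 in A1. apply Rabs_def2 in A2. lra. }
 set (Phi := lmin L Ff (Ff x0)).
 assert (HPhi : App Phi) by (apply App_lmin; [intros x Hx; apply (proj1 (HFf x (HL1 x Hx))) | apply (proj1 (HFf x0 Hx0))]).
 destruct (HPhi (eps/2)) as [e [Hw He]]. lra.
 exists e. split; auto. intros z Hz.
 assert (B1 : Phi z < g z + eps / 2).
 { destruct (HL2 z Hz) as [x [Hx Hxz]]. eapply Rle_lt_trans. apply (lmin_le L Ff (Ff x0) z x Hx). auto. }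
 assert (B2 : g z - eps / 2 < Phi z).
 { apply lmin_gt. intros x Hx. apply (proj2 (proj2 (proj2 (HFf x (HL1 x Hx))))); auto. apply (proj2 (proj2 (proj2 (HFf x0 Hx0)))); auto. }
 specialize (He z Hz). apply Rabs_def2 in He. apply Rabs_def1; lra. Qed.

End SW.

Fixpoint kprodf (m : nat) (F : nat -> R) : R := match m with O => 1 | S m' => kprodf m' F * F m' end.

Lemma kprodf_ext m F G : (forall i, (i < m)%nat -> F i = G i) -> kprodf m F = kprodf m G.
Proof. induction m; simpl; intros H; auto. rewrite IHm, H by (auto; lia). auto. Qed.
Lemma kprodf_mul m F G : kprodf m F * kprodf m G = kprodf m (fun i => F i * G i).
Proof. induction m; simpl. ring. rewrite <- IHm. ring. Qed.
Lemma kprodf_one m : kprodf m (fun _ => 1) = 1.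
Proof. induction m; simpl; auto. rewrite IHm; ring. Qed.
Lemma kprodf_scal m c F : kprodf m (fun i => c * F i) = c ^ m * kprodf m F.
Proof. induction m; simpl. ring. rewrite IHm. ring. Qed.

Section KP.
Variable Sp : Pt -> Prop.

Lemma psd_kprod m (A : nat -> kernel) : (forall i, (i < m)%nat -> psdS Sp (A i)) -> psdS Sp (fun X Y => kprodf m (fun i => A i X Y)).
Proof. induction m; intros H; simpl. apply psd_const; lra. apply (psd_mul Sp (fun X Y => kprodf m (fun i => A i X Y)) (A m)).
 apply IHm; intros; apply H; lia. apply H; lia. Qed.

Lemma kprod_mono m (A B : nat -> kernel) : (forall i, (i < m)%nat -> psdS Sp (A i) /\ kle Sp (A i) (B i)) ->
  kle Sp (fun X Y => kprodf m (fun i => A i X Y)) (fun X Y => kprodf m (fun i => B i X Y)).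
Proof. induction m; intros H; simpl. apply kle_refl; auto.
 apply (kle_mul Sp (fun X Y => kprodf m (fun i => A i X Y)) (A m) (fun X Y => kprodf m (fun i => B i X Y)) (B m)).
 apply psd_kprod; intros; apply H; lia. apply IHm; intros; apply H; lia. apply H; lia. apply H; lia. Qed.

Lemma kprod_ge1 m (A : nat -> kernel) : (forall i, (i < m)%nat -> kle Sp (fun _ _ => 1) (A i)) ->
  kle Sp (fun _ _ => 1) (fun X Y => kprodf m (fun i => A i X Y)).
Proof. induction m; intros H; simpl. apply kle_refl; auto.
 apply (kle_ext Sp (fun _ _ => 1 * 1) (fun X Y => kprodf m (fun i => A i X Y) * A m X Y)). intros; ring. intros; auto.
 apply (kle_mul Sp (fun _ _ => 1) (fun _ _ => 1)). apply psd_const; lra. apply IHm; intros; apply H; lia.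
 apply psd_const; lra. apply H; lia. Qed.

Lemma kprod_ge_fac m (A : nat -> kernel) j : (forall i, (i < m)%nat -> kle Sp (fun _ _ => 1) (A i)) -> (j < m)%nat ->
  kle Sp (A j) (fun X Y => kprodf m (fun i => A i X Y)).
Proof. assert (Hp : forall i, kle Sp (fun _ _ => 1) (A i) -> psdS Sp (A i)) by (intros i Hi; apply (kle_psd Sp _ _ (psd_const Sp 1 ltac:(lra)) Hi)).
 induction m; intros H Hj. lia. simpl. destruct (Nat.eq_dec j m).
 - subst. apply (kle_ext Sp (fun X Y => 1 * A m X Y) (fun X Y => kprodf m (fun i => A i X Y) * A m X Y)). intros; ring. intros; auto.
   apply kle_mul. apply psd_const; lra. apply kprod_ge1; intros; apply H; lia. apply Hp, H; lia. apply kle_refl. apply Hp, H; lia.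
 - apply (kle_ext Sp (fun X Y => A j X Y * 1) (fun X Y => kprodf m (fun i => A i X Y) * A m X Y)). intros; ring. intros; auto.
   apply kle_mul. apply Hp, H; lia. apply IHm; intros; try apply H; lia. apply psd_const; lra. apply H; lia. Qed.

Lemma kprod_sum m (k : nat -> kernel) : (forall i, (i < m)%nat -> psdS Sp (k i)) ->
  kle Sp (fun X Y => kprodf m (fun i => k i X Y)) (fun X Y => (rsum m (fun i => k i X Y)) ^ m).
Proof. induction m; intros H; simpl. apply kle_refl; auto.
 assert (Hs : psdS Sp (fun X Y => rsum m (fun i => k i X Y))) by (apply psd_rsum; intros; apply H; lia).
 assert (Hs1 : psdS Sp (fun X Y => rsum m (fun i => k i X Y) + k m X Y)) by (apply psd_add; auto; apply H; lia).
 apply kle_trans with (fun X Y => (rsum m (fun i => k i X Y)) ^ m * (rsum m (fun i => k i X Y) + k m X Y)).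
 - apply (kle_mul Sp _ (k m)). apply psd_kprod; intros; apply H; lia. apply IHm; intros; apply H; lia. apply H; lia.
   unfold kle. apply (psd_ext Sp (fun X Y => rsum m (fun i => k i X Y))). intros; ring. auto.
 - apply (kle_ext Sp (fun X Y => (rsum m (fun i => k i X Y)) ^ m * (rsum m (fun i => k i X Y) + k m X Y))
     (fun X Y => (rsum m (fun i => k i X Y) + k m X Y) ^ m * (rsum m (fun i => k i X Y) + k m X Y))). intros; auto. intros; simpl; ring.
   apply kle_mul. apply psd_pow; auto. apply kle_pow; auto. unfold kle. apply (psd_ext Sp (k m)). intros; ring. apply H; lia.
   auto. apply kle_refl. destruct Hs1; auto. Qed.

Lemma pow1p_le L T : psdS Sp L ->
  kle Sp (fun X Y => (1 + L X Y) ^ T) (fun X Y => 2 ^ T * rsum (S T) (fun t => L X Y ^ t)).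
Proof. intros HL.
 assert (Hid : forall l M, l * rsum M (fun t => l ^ t) = rsum (S M) (fun t => l ^ t) - 1).
 { intros l M. induction M; simpl. ring. simpl in IHM. rewrite Rmult_plus_distr_l, IHM. ring. }
 induction T.
 - simpl. apply (kle_ext Sp (fun _ _ => 1) (fun _ _ => 1)). intros; ring. intros; ring. apply kle_refl; auto.
 - apply kle_trans with (fun X Y => (2 ^ T * rsum (S T) (fun t => L X Y ^ t)) * (1 + L X Y)).
   + apply (kle_ext Sp (fun X Y => (1 + L X Y) ^ T * (1 + L X Y)) (fun X Y => (2 ^ T * rsum (S T) (fun t => L X Y ^ t)) * (1 + L X Y))).
     intros; simpl; ring. intros; auto.
     apply kle_mul. apply psd_pow, psd_add; auto; apply psd_const; lra. auto. apply psd_add; auto; apply psd_const; lra.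
     apply kle_refl. intros; destruct HL as [Hs _]; rewrite Hs; auto.
   + unfold kle. apply (psd_ext Sp (fun X Y => 2 ^ T * (L X Y ^ (S T) + 1))).
     intros X Y _ _. replace (rsum (S (S T)) (fun t => L X Y ^ t)) with (rsum (S T) (fun t => L X Y ^ t) + L X Y ^ (S T)) by auto.
     assert (E := Hid (L X Y) (S T)). replace (rsum (S (S T)) (fun t => L X Y ^ t)) with (rsum (S T) (fun t => L X Y ^ t) + L X Y ^ (S T)) in E by auto.
     replace (2 ^ S T) with (2 * 2 ^ T) by (simpl; ring).
     replace (2 ^ T * rsum (S T) (fun t => L X Y ^ t) * (1 + L X Y)) with
       (2 ^ T * rsum (S T) (fun t => L X Y ^ t) + 2 ^ T * (L X Y * rsum (S T) (fun t => L X Y ^ t))) by ring.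
     rewrite E. ring.
     apply psd_scale. apply pow_le; lra. apply psd_add. apply psd_pow; auto. apply psd_const; lra. Qed.

End KP.

Lemma kle_sc_trans Sp A B C c c' : 0 <= c -> kle Sp A (fun X Y => c * B X Y) -> kle Sp B (fun X Y => c' * C X Y) ->
  kle Sp A (fun X Y => (c * c') * C X Y).
Proof. intros Hc H1 H2. eapply kle_trans. apply H1. eapply kle_ext. 3: apply (kle_scale Sp c _ _ Hc H2).
 intros; auto. intros; cbv beta; ring. Qed.

Definition QT (d n T : nat) : kernel := fun X Y => kprodf n (fun i => (1 + Lk d i X Y) ^ T).

Section UP.
Variables (Sp : Pt -> Prop) (d n N : nat) (f : nat -> R -> R) (a b : nat -> nat -> R).
Hypothesis Hab : forall i t, a i t = Rabs (b i t).
Hypothesis Hfs : forall i x, (1 <= i <= N)%nat -> infinite_sum (fun t => a i t * x ^ t) (f i x).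
Hypothesis HN2 : (2 <= N)%nat.
Hypothesis Hpos : forall i t, (1 <= i <= N)%nat -> 0 < a i t.

Lemma HN1 : (1 <= N)%nat. Proof. lia. Qed.

Lemma psd_1L i : psdS Sp (fun X Y => 1 + Lk d i X Y).
Proof. apply psd_add. apply psd_const; lra. apply psd_Lk. Qed.

Lemma ge1_1L i : kle Sp (fun _ _ => 1) (fun X Y => 1 + Lk d i X Y).
Proof. unfold kle. apply (psd_ext Sp (Lk d i)). intros; ring. apply psd_Lk. Qed.

Lemma ge1_pow i j : kle Sp (fun _ _ => 1) (fun X Y => (1 + Lk d i X Y) ^ j).
Proof. apply (kle_ext Sp (fun _ _ => 1 ^ j) (fun X Y => (1 + Lk d i X Y) ^ j)). intros; apply pow1. intros; auto.
 apply (kle_pow Sp (fun _ _ => 1)). apply psd_const; lra. apply ge1_1L. Qed.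

Lemma psd_QT T : psdS Sp (QT d n T).
Proof. apply psd_kprod. intros; apply psd_pow, psd_1L. Qed.

Lemma QT_mono T T' : (T <= T')%nat -> kle Sp (QT d n T) (QT d n T').
Proof. intros H. apply kprod_mono. intros i Hi. split. apply psd_pow, psd_1L.
 apply (kle_ext Sp (fun X Y => (1 + Lk d i X Y) ^ T * 1) (fun X Y => (1 + Lk d i X Y) ^ T * (1 + Lk d i X Y) ^ (T' - T))).
 intros; ring. intros; rewrite <- pow_add; f_equal; lia.
 apply kle_mul. apply psd_pow, psd_1L. apply kle_refl. intros; destruct (psd_pow Sp _ T (psd_1L i)) as [Hs _]; auto.
 apply psd_const; lra. apply ge1_pow. Qed.

Lemma Hb_QT e : wf n d e -> exists T, Hb Sp (QT d n T) (peval e).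
Proof. induction e; simpl; intros Hw.
 - exists O. apply (Hb_ext Sp (fun _ _ => 1) _ (fun _ => r)). intros; unfold QT; simpl. rewrite kprodf_one; auto.
   auto. apply Hb_const.
 - exists 1%nat. destruct Hw as [Hi Hk]. apply (Hb_mono Sp (fun X Y => 1 + Lk d i X Y)).
   apply (Hb_mono Sp (Lk d i)). apply Hb_coord; auto. unfold kle. apply (psd_ext Sp (fun _ _ => 1)). intros; ring. apply psd_const; lra.
   apply (kle_ext Sp (fun X Y => (1 + Lk d i X Y) ^ 1) (fun X Y => kprodf n (fun i0 => (1 + Lk d i0 X Y) ^ 1))).
   intros; ring. intros; auto. apply (kprod_ge_fac Sp n (fun i0 X Y => (1 + Lk d i0 X Y) ^ 1)). intros; apply ge1_pow. auto.
 - destruct Hw as [H1 H2]. destruct (IHe1 H1) as [T1 HT1]. destruct (IHe2 H2) as [T2 HT2].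
   exists (max T1 T2). apply Hb_add. apply (Hb_mono Sp (QT d n T1)); auto. apply QT_mono; lia.
   apply (Hb_mono Sp (QT d n T2)); auto. apply QT_mono; lia.
 - destruct Hw as [H1 H2]. destruct (IHe1 H1) as [T1 HT1]. destruct (IHe2 H2) as [T2 HT2].
   exists (T1 + T2)%nat. apply (Hb_ext Sp (fun X Y => QT d n T1 X Y * QT d n T2 X Y) _ (fun X => peval e1 X * peval e2 X)).
   intros; unfold QT. rewrite kprodf_mul. apply kprodf_ext; intros; rewrite pow_add; auto. auto.
   apply Hb_mul; auto; apply psd_QT. Qed.

Lemma min_pos (c : nat -> R) T : (forall t, (t <= T)%nat -> 0 < c t) -> exists m, 0 < m /\ forall t, (t <= T)%nat -> m <= c t.
Proof. induction T; intros H. exists (c O). split. apply H; lia. intros t Ht. replace t with O by lia. lra.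
 destruct IHT as [m [Hm Hm2]]. intros; apply H; lia. exists (Rmin m (c (S T))). split. apply Rmin_pos; [auto | apply H; lia].
 intros t Ht. destruct (Nat.eq_dec t (S T)). subst; apply Rmin_r. eapply Rle_trans. apply Rmin_l. apply Hm2; lia. Qed.

Lemma Ha0 i t : 0 <= a i t.
Proof. rewrite Hab; apply Rabs_pos. Qed.

Lemma QT_le_G T : exists C, 0 <= C /\ kle Sp (QT d n T) (fun X Y => C * Gk d n f N X Y).
Proof.
 destruct (min_pos (a 1%nat) T) as [m [Hm Hm2]]. intros; apply Hpos; lia.
 set (C1 := 2 ^ T * / m).
 assert (HC1 : 0 <= C1) by (unfold C1; apply Rmult_le_pos; [apply pow_le; lra | apply Rlt_le, Rinv_0_lt_compat; auto]).
 assert (Hfac : forall i, kle Sp (fun X Y => (1 + Lk d i X Y) ^ T) (fun X Y => C1 * f 1%nat (Lk d i X Y))).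
 { intros i. eapply kle_trans. apply pow1p_le. apply psd_Lk.
   unfold C1. apply (kle_ext Sp (fun X Y => 2 ^ T * (/ m * rsum (S T) (fun t => m * Lk d i X Y ^ t)))
      (fun X Y => 2 ^ T * (/ m * f 1%nat (Lk d i X Y)))).
   intros; rewrite (rsum_scal (S T) m (fun t => Lk d i x y ^ t)); field; apply Rgt_not_eq; lra. intros; cbv beta; unfold C1; ring.
   apply kle_scale. apply pow_le; lra. apply kle_scale. apply Rlt_le, Rinv_0_lt_compat; auto.
   apply (series_ge (a 1%nat) (f 1%nat) (Ha0 1%nat) (fun x => Hfs 1%nat x ltac:(lia)) Sp (Lk d i) (S T) (fun _ => m)).
   apply psd_Lk. intros t Ht. split. lra. apply Hm2; lia. }
 assert (HP : kle Sp (QT d n T) (fun X Y => C1 ^ n * kprodf n (fun i => f 1%nat (Lk d i X Y)))).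
 { apply (kle_ext Sp (QT d n T) (fun X Y => kprodf n (fun i => C1 * f 1%nat (Lk d i X Y)))). intros; auto.
   intros; rewrite kprodf_scal; auto. apply kprod_mono. intros i Hi. split. apply psd_pow, psd_1L. apply Hfac. }
 assert (HK1 : kle Sp (fun X Y => kprodf n (fun i => f 1%nat (Lk d i X Y))) (fun X Y => K1 d n f X Y ^ n)).
 { apply (kprod_sum Sp n (fun i X Y => f 1%nat (Lk d i X Y))). intros; apply (psd_f1Lk Sp d N f a b Hab Hfs HN1). }
 assert (Hpsd1 : psdS Sp (K1 d n f)) by apply (psd_K1 Sp d n N f a b Hab Hfs HN1).
 assert (HG2 : kle Sp (fun X Y => K1 d n f X Y ^ n) (fun X Y => / a 2%nat n * Gk d n f 2 X Y)).
 { assert (Ha2 : 0 < a 2%nat n) by (apply Hpos; lia).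
   apply (kle_ext Sp (fun X Y => / a 2%nat n * rsum (S n) (fun t => (if Nat.eqb t n then a 2%nat n else 0) * K1 d n f X Y ^ t))
     (fun X Y => / a 2%nat n * f 2%nat (K1 d n f X Y))).
   intros. rewrite rsum_delta by lia. field. lra. intros; rewrite Gk_S by lia; unfold Gk; simpl; auto.
   apply kle_scale. apply Rlt_le, Rinv_0_lt_compat; auto.
   apply (series_ge (a 2%nat) (f 2%nat) (Ha0 2%nat) (fun x => Hfs 2%nat x ltac:(lia)) Sp (K1 d n f) (S n)). auto.
   intros t Ht. destruct (Nat.eqb t n) eqn:E. apply Nat.eqb_eq in E; subst; split; lra. split. lra. apply Ha0. }
 assert (Hchain : forall k, (2 <= k <= N)%nat -> exists C, 0 <= C /\ kle Sp (QT d n T) (fun X Y => C * Gk d n f k X Y)).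
 { induction k; intros Hk. lia. destruct (Nat.eq_dec k 1).
   - subst. exists (C1 ^ n * / a 2%nat n). split. apply Rmult_le_pos. apply pow_le; auto. apply Rlt_le, Rinv_0_lt_compat, Hpos; lia.
     apply (kle_sc_trans Sp (QT d n T) (fun X Y => kprodf n (fun i => f 1%nat (Lk d i X Y))) (Gk d n f 2) (C1 ^ n) (/ a 2%nat n)).
     apply pow_le; auto. exact HP. eapply kle_trans. apply HK1. apply HG2.
   - destruct IHk as [C [HC HCk]]. lia.
     assert (Hak : 0 < a (S k) 1%nat) by (apply Hpos; lia).
     exists (C * / a (S k) 1%nat). split. apply Rmult_le_pos; auto. apply Rlt_le, Rinv_0_lt_compat; auto.
     apply (kle_sc_trans Sp _ (Gk d n f k)); auto.
     apply (kle_ext Sp (fun X Y => / a (S k) 1%nat * rsum 2 (fun t => (if Nat.eqb t 1 then a (S k) 1%nat else 0) * Gk d n f k X Y ^ t))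
       (fun X Y => / a (S k) 1%nat * f (S k) (Gk d n f k X Y))).
     intros. rewrite rsum_delta by lia. field. lra. intros; rewrite Gk_S by lia; auto.
     apply kle_scale. apply Rlt_le, Rinv_0_lt_compat; auto.
     apply (series_ge (a (S k)) (f (S k)) (Ha0 _) (fun x => Hfs (S k) x ltac:(lia)) Sp (Gk d n f k) 2).
     apply (psd_Gk Sp d n N f a b Hab Hfs HN1). lia.
     intros t Ht. destruct (Nat.eqb t 1) eqn:E. apply Nat.eqb_eq in E; subst; split; lra. split. lra. apply Ha0. }
 apply Hchain. lia. Qed.

Lemma Hb_poly e : wf n d e -> Hb Sp (Gk d n f N) (peval e).
Proof. intros Hw. destruct (Hb_QT e Hw) as [T HT]. destruct (QT_le_G T) as [C [HC HC2]].
 apply (Hb_mono_sc Sp _ _ _ C HT HC HC2). Qed.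

End UP.

Lemma rsum_const m r : rsum m (fun _ => r) = INR m * r.
Proof. induction m as [|m IH]; simpl. lra. rewrite IH. destruct m; simpl; lra. Qed.

Section V.
Variables (d n N : nat) (f : nat -> R -> R) (a : nat -> nat -> R).
Hypothesis Ha : forall i t, 0 <= a i t.
Hypothesis Hfs : forall i x, (1 <= i <= N)%nat -> infinite_sum (fun t => a i t * x ^ t) (f i x).
Hypothesis Hd : (1 <= d)%nat.
Let Sp := inI d n.

Lemma lip_comp i B L g g' : (1 <= i <= N)%nat -> 1 <= B -> Rabs g <= B -> Rabs g' <= B -> Rabs (g' - g) <= L ->
  Rabs (f i g) <= f i B /\ Rabs (f i g' - f i g) <= f i (2 * B) * L.
Proof. intros Hi HB H1 H2 H3. split.
 - eapply Rle_trans. apply (ps_abs (a i) (f i) (Ha i) (fun x => Hfs i x Hi)).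
   apply (ps_mono (a i) (f i) (Ha i) (fun x => Hfs i x Hi)). apply Rabs_pos. auto.
 - eapply Rle_trans. apply (ps_lip (a i) (f i) (Ha i) (fun x => Hfs i x Hi) B g' g); auto.
   apply Rmult_le_compat_l. apply (ps_nonneg (a i) (f i) (Ha i) (fun x => Hfs i x Hi)). lra. auto. Qed.

Lemma Lk_lip i : (i < n)%nat -> forall x y x' y' del, Sp x -> Sp y -> Sp x' -> Sp y' -> close d n del x x' -> close d n del y y' ->
  Rabs (Lk d i x y) <= INR d /\ Rabs (Lk d i x' y' - Lk d i x y) <= 2 * INR d * del.
Proof. intros Hi x y x' y' del Hx Hy Hx' Hy' Hc1 Hc2.
 assert (Hr : forall r, rsum d (fun _ => r) = INR d * r) by (intros; apply rsum_const).
 split.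
 - unfold Lk. eapply Rle_trans. apply rsum_abs. replace (INR d) with (rsum d (fun _ => 1)) by (rewrite Hr; ring).
   apply rsum_le; intros k Hk. rewrite Rabs_mult.
   pose proof (coord_bound d n x i k Hx Hi Hk). pose proof (coord_bound d n y i k Hy Hi Hk).
   assert (Rabs (x i k) * Rabs (y i k) <= 1 * 1) by (apply Rmult_le_compat; auto; apply Rabs_pos). lra.
 - unfold Lk. rewrite <- rsum_minus. eapply Rle_trans. apply rsum_abs.
   replace (2 * INR d * del) with (rsum d (fun _ => 2 * del)) by (rewrite Hr; ring).
   apply rsum_le; intros k Hk.
   replace (x' i k * y' i k - x i k * y i k) with (x' i k * (y' i k - y i k) + y i k * (x' i k - x i k)) by ring.
   eapply Rle_trans. apply Rabs_triang. rewrite !Rabs_mult.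
   pose proof (coord_bound d n x' i k Hx' Hi Hk). pose proof (coord_bound d n y i k Hy Hi Hk).
   specialize (Hc1 i k Hi Hk). specialize (Hc2 i k Hi Hk). rewrite Rabs_minus_sym in Hc1, Hc2.
   assert (Rabs (x' i k) * Rabs (y' i k - y i k) <= 1 * del) by (apply Rmult_le_compat; try lra; apply Rabs_pos).
   assert (Rabs (y i k) * Rabs (x' i k - x i k) <= 1 * del) by (apply Rmult_le_compat; try lra; apply Rabs_pos). lra. Qed.

Lemma Gk_lip k : (1 <= k <= N)%nat -> exists B L, 1 <= B /\ 0 <= L /\ forall x y x' y' del, Sp x -> Sp y -> Sp x' -> Sp y' ->
  close d n del x x' -> close d n del y y' -> Rabs (Gk d n f k x y) <= B /\ Rabs (Gk d n f k x' y' - Gk d n f k x y) <= L * del.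
Proof.
 assert (Hd1 : 1 <= INR d) by (apply (le_INR 1 d) in Hd; simpl in Hd; auto).
 induction k; intros Hk. lia. destruct k.
 -
   exists (INR n * f 1%nat (INR d) + 1), (INR n * (f 1%nat (2 * INR d) * (2 * INR d))).
   assert (Hf0 : 0 <= f 1%nat (INR d)) by (apply (ps_nonneg (a 1%nat) (f 1%nat) (Ha _) (fun x => Hfs 1%nat x ltac:(lia))); lra).
   assert (Hf1 : 0 <= f 1%nat (2 * INR d)) by (apply (ps_nonneg (a 1%nat) (f 1%nat) (Ha _) (fun x => Hfs 1%nat x ltac:(lia))); lra).
   assert (Hn0 : 0 <= INR n) by apply pos_INR.
   split. nra. split. apply Rmult_le_pos; auto. apply Rmult_le_pos; lra.
   intros x y x' y' del Hx Hy Hx' Hy' Hc1 Hc2.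
   assert (Hr : forall m r, rsum m (fun _ => r) = INR m * r) by (intros; apply rsum_const).
   unfold Gk; simpl fcomp. unfold K1. split.
   + eapply Rle_trans. apply rsum_abs. eapply Rle_trans with (rsum n (fun _ => f 1%nat (INR d))). apply rsum_le; intros i Hi.
     destruct (Lk_lip i Hi x y x y 1 Hx Hy Hx Hy) as [H1 _]. intros i0 k0 _ _; rewrite Rminus_diag, Rabs_R0; lra.
     intros i0 k0 _ _; rewrite Rminus_diag, Rabs_R0; lra.
     apply (lip_comp 1 (INR d) 0 _ _ ltac:(lia) Hd1 H1 H1). rewrite Rminus_diag, Rabs_R0; lra.
     rewrite Hr. lra.
   + rewrite <- rsum_minus. eapply Rle_trans. apply rsum_abs.
     eapply Rle_trans with (rsum n (fun _ => f 1%nat (2 * INR d) * (2 * INR d * del))). apply rsum_le; intros i Hi.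
     destruct (Lk_lip i Hi x y x' y' del Hx Hy Hx' Hy' Hc1 Hc2) as [H1 H2].
     destruct (Lk_lip i Hi x' y' x' y' 1 Hx' Hy' Hx' Hy') as [H3 _]. intros i0 k0 _ _; rewrite Rminus_diag, Rabs_R0; lra.
     intros i0 k0 _ _; rewrite Rminus_diag, Rabs_R0; lra.
     apply (lip_comp 1 (INR d) _ _ _ ltac:(lia) Hd1 H1 H3 H2).
     rewrite Hr. right; ring.
 - destruct IHk as [B [L [HB [HL HBL]]]]. lia.
   exists (f (S (S k)) B + 1), (f (S (S k)) (2 * B) * L).
   assert (Hf1 : 0 <= f (S (S k)) (2 * B)) by (apply (ps_nonneg (a _) (f _) (Ha _) (fun x => Hfs _ x Hk)); lra).
   assert (Hf0 : 0 <= f (S (S k)) B) by (apply (ps_nonneg (a _) (f _) (Ha _) (fun x => Hfs _ x Hk)); lra).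
   split. lra. split. apply Rmult_le_pos; auto.
   intros x y x' y' del Hx Hy Hx' Hy' Hc1 Hc2.
   rewrite !(Gk_S d n f (S k)) by lia.
   destruct (HBL x y x' y' del Hx Hy Hx' Hy' Hc1 Hc2) as [H1 H2].
   destruct (HBL x' y' x' y' 1 Hx' Hy' Hx' Hy') as [H3 _]. intros i0 k0 _ _; rewrite Rminus_diag, Rabs_R0; lra.
   intros i0 k0 _ _; rewrite Rminus_diag, Rabs_R0; lra.
   destruct (lip_comp (S (S k)) B (L * del) _ _ Hk HB H1 H3 H2) as [H4 H5]. split. lra. rewrite Rmult_assoc. auto.
Qed.

Lemma KN_cont : (1 <= N)%nat -> kernel_continuous_on_I d n (Gk d n f N).
Proof. intros HN x y Hx Hy eps Heps. destruct (Gk_lip N ltac:(lia)) as [B [L [HB [HL HBL]]]].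
 exists (eps / (L + 1)). split. apply Rdiv_lt_0_compat; lra.
 intros x' y' Hx' Hy' H1 H2. apply (dist_close d n) in H1. apply (dist_close d n) in H2.
 destruct (HBL x y x' y' _ Hx Hy Hx' Hy' H1 H2) as [_ H3]. eapply Rle_lt_trans. apply H3.
 apply (Rmult_lt_reg_l (L + 1)). lra. replace ((L + 1) * (L * (eps / (L + 1)))) with (L * eps) by (field; lra). nra. Qed.

End V.

Lemma cont_conv d n g : continuous_on_I d n g -> cont_on d n g.
Proof. intros H x Hx eps Heps. destruct (H x Hx eps Heps) as [del [Hd Hd2]].
 assert (Hc : 0 <= INR n * INR d) by (apply Rmult_le_pos; apply pos_INR).
 exists (del / (2 * (INR n * INR d + 1))). split. apply Rdiv_lt_0_compat; lra.
 intros y Hy Hcl. apply Hd2; auto. eapply Rle_lt_trans. apply (close_dist d n); [|eauto]. apply Rdiv_lt_0_compat; lra.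
 replace ((INR n * INR d + 1) * (del / (2 * (INR n * INR d + 1)))) with (del / 2) by (field; lra). lra. Qed.

Lemma coef_abs (D : nat -> nat -> R -> R) i t : Rabs (D i t 0) / INR (fact t) = Rabs (D i t 0 / INR (fact t)).
Proof. assert (0 < INR (fact t)) by (apply lt_0_INR, lt_O_fact).
 unfold Rdiv. rewrite Rabs_mult, Rabs_inv, (Rabs_right (INR (fact t))); auto. lra. Qed.

Theorem mainTheorem1
  (d n N : nat) (hd : (2 <= d)%nat) (hn : (1 <= n)%nat) (hN : (2 <= N)%nat)
  (sigma : nat -> R -> R) (D : nat -> nat -> R -> R) (f : nat -> R -> R)
  (hD : forall i, (1 <= i <= N)%nat -> deriv_tower (sigma i) (D i))
  (hT : forall i, (1 <= i <= N)%nat -> taylor_decomp (sigma i) (D i))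
  (hf : forall i x, (1 <= i <= N)%nat ->
          infinite_sum (fun t => Rabs (D i t 0) / INR (fact t) * x ^ t) (f i x)) :
  psd_kernel (inI d n) (KN d n N f) /\
  (forall (dd nn pp : nat -> nat) (gam : nat -> nat -> nat -> R)
          (W : nat -> nat -> nat -> R) (WN : nat -> R),
     arch_ok d n N dd nn pp ->
     in_RKHS (inI d n) (KN d n N f) (cnn sigma dd nn pp gam W N WN)) /\
  ((forall i t, (1 <= i <= N)%nat -> D i t 0 <> 0) -> c_universal d n (KN d n N f)).
Proof.
 set (a := fun i t => Rabs (D i t 0) / INR (fact t)).
 set (b := fun i t => D i t 0 / INR (fact t)).
 assert (Hab : forall i t, a i t = Rabs (b i t)) by (intros; apply coef_abs).
 assert (Hfs : forall i x, (1 <= i <= N)%nat -> infinite_sum (fun t => a i t * x ^ t) (f i x)) by (intros; apply hf; auto).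
 assert (Hsig : forall i x, (1 <= i <= N)%nat -> infinite_sum (fun t => b i t * x ^ t) (sigma i x)) by (intros; apply hT; auto).
 assert (HN : (1 <= N)%nat) by lia.
 assert (Hpsd : psdS (inI d n) (Gk d n f N)) by (apply (psd_Gk (inI d n) d n N f a b Hab Hfs); lia).
 split; [|split].
 - destruct Hpsd as [H1 H2]. split; [exact H1 | exact H2].
 - intros dd nn pp gam W WN [Hd1 [Hp1 [Hn1 _]]].
   apply (main_crit (inI d n) (Gk d n f N)). auto.
   apply (Hb_cnn (inI d n) d n N f a b sigma Hab Hfs Hsig HN dd nn pp gam W Hd1 Hp1 Hn1 WN hN).
 - intros Hnz.
   assert (Ha0 : forall i t, 0 <= a i t) by (intros; rewrite Hab; apply Rabs_pos).
   assert (Hpos : forall i t, (1 <= i <= N)%nat -> 0 < a i t).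
   { intros i t Hi. unfold a. apply Rdiv_lt_0_compat. apply Rabs_pos_lt. apply Hnz; auto. apply lt_0_INR, lt_O_fact. }
   split.
   + apply (KN_cont d n N f a Ha0 Hfs); lia.
   + intros g Hg eps Heps. apply cont_conv in Hg.
     destruct (stone_weierstrass d n g Hg eps Heps) as [e [Hw He]].
     exists (peval e). split.
     * apply (main_crit (inI d n) (Gk d n f N)). auto.
       apply (Hb_poly (inI d n) d n N f a b Hab Hfs hN Hpos e Hw).
     * intros x Hx. apply He; auto.
Qed.
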